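(* Let $\mathbb{S}=[0,1]$ with $0$ and $1$ identified, and let $H:\mathbb{S}\times\mathbb{R}\times\mathbb{R}\to\mathbb{R}$ be $C^\infty$ with $\frac{\partial^2H}{\partial p^2}>0$, $p\mapsto H(x,p,u)$ superlinear for each $(x,u)$, and $|\frac{\partial H}{\partial u}|\le\kappa$ for some $\kappa>0$. Let $u_0$ be a viscosity solution of $H(x,u'(x),u(x))=0$ on $\mathbb{S}$ such that $\frac{\partial H}{\partial p}(x,u_0'(x),u_0(x))\ne0$ at every differentiability point $x$ of $u_0$. Set $B(x)=\frac{\partial H}{\partial p}(x,u_0'(x),u_0(x))$, $$\mu=\frac{\int_0^1\frac{\partial H}{\partial u}(\tau,u_0'(\tau),u_0(\tau))B(\tau)^{-1}d\tau}{\int_0^1B(\tau)^{-1}d\tau},\qquad \rho(x)=\exp\left\{\int_0^x\frac{\mu-\frac{\partial H}{\partial u}(\tau,u_0'(\tau),u_0(\tau))}{B(\tau)}\,d\tau\right\},$$ $Z=-\int_0^1B(\tau)^{-1}d\tau$, $\mathcal{T}=|Z|$, and $f(x)=\frac{2\pi}{Z}\int_0^x\left(-B(\tau)^{-1}\right)d\tau$. Assume $\mu<0$. Fix $x_0\in\mathbb{S}$ and for $\epsilon>0$ define $$w(x,t)=u_0(x)+\epsilon\rho(x)+\epsilon\rho(x)\sin\!\Big(-\frac{\pi}{2}+f(x)-f(x_0)+\frac{2\pi}{Z}t\Big),\quad (x,t)\in\mathbb{S}\times[0,+\infty).$$ Then there exists $\tilde\epsilon_1>0$ such that for every $\epsilon\in(0,\tilde\epsilon_1]$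 and all $(x,t)\in\mathbb{S}\times[0,+\infty)$, $$w(x,t+\mathcal{T})=w(x,t)\quad\text{and}\quad \partial_tw(x,t)+H(x,\partial_xw(x,t),w(x,t))\le0.$$
   Context: It is known that under these assumptions $u_0$ is of class $C^\infty$, so $B$ is smooth and nowhere zero, and $\rho$ is a smooth positive function on $\mathbb{S}$. *)

(* Defs.v *)
From Stdlib Require Import Reals List.
From Coquelicot Require Import Coquelicot.
Open Scope R_scope.

(* The circle S = [0,1] with 0 ~ 1 is represented by 1-periodic functions on R. *)

(* Partial derivative of a function of three real variables (x,p,u)
   in direction i (0 = x, 1 = p, 2 = u). *)
Definition partial (i : nat) (g : R -> R -> R -> R) : R -> R -> R -> R :=
  match i with
  | O => fun x p u => Derive (fun y => g y p u) x
  | S O => fun x p u => Derive (fun q => g x q u) p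
  | _ => fun x p u => Derive (fun v => g x p v) u
  end.

Definition ex_partial (i : nat) (g : R -> R -> R -> R) (x p u : R) : Prop :=
  match i with
  | O => ex_derive (fun y => g y p u) x
  | S O => ex_derive (fun q => g x q u) p
  | _ => ex_derive (fun v => g x p v) u
  end.

(* Iterated partial derivative: apply the directions in l (innermost last). *)
Fixpoint pderiv (l : list nat) (g : R -> R -> R -> R) : R -> R -> R -> R :=
  match l with
  | nil => g
  | i :: l' => partial i (pderiv l' g)
  end.

Definition continuous3 (g : R -> R -> R -> R) (x p u : R) : Prop :=
  forall eps, 0 < eps -> exists delta, 0 < delta /\
    forall x' p' u', Rabs (x' - x) < delta -> Rabs (p' - p) < delta ->
      Rabs (u' - u) < delta -> Rabs (g x' p' u' - g x p u) < eps.

Definition smooth3 (g : R -> R -> R -> R) : Prop :=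
  forall l : list nat,
    (forall x p u, continuous3 (pderiv l g) x p u) /\
    (forall i x p u, ex_partial i (pderiv l g) x p u).

Definition Hp (H : R -> R -> R -> R) : R -> R -> R -> R := partial 1 H.
Definition Hu (H : R -> R -> R -> R) : R -> R -> R -> R := partial 2 H.
Definition Hpp (H : R -> R -> R -> R) : R -> R -> R -> R := partial 1 (partial 1 H).

Definition superlinear_p (H : R -> R -> R -> R) : Prop :=
  forall x u M : R, exists R0 : R, forall p : R, R0 <= Rabs p -> M * Rabs p <= H x p u.

Definition periodic1 (f : R -> R) : Prop := forall x, f (x + 1) = f x.

Definition C1 (phi : R -> R) : Prop :=
  (forall x, ex_derive phi x) /\ (forall x, continuous (Derive phi) x).

Definition local_max_at (g : R -> R) (x : R) : Prop :=
  exists r, 0 < r /\ forall y, Rabs (y - x) < r -> g y <= g x.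
Definition local_min_at (g : R -> R) (x : R) : Prop :=
  exists r, 0 < r /\ forall y, Rabs (y - x) < r -> g x <= g y.

Definition viscosity_solution (H : R -> R -> R -> R) (u : R -> R) : Prop :=
  periodic1 u /\ (forall x, continuous u x) /\
  (forall phi x, C1 phi -> local_max_at (fun y => u y - phi y) x ->
     H x (Derive phi x) (u x) <= 0) /\
  (forall phi x, C1 phi -> local_min_at (fun y => u y - phi y) x ->
     0 <= H x (Derive phi x) (u x)).

Section Quantities.
Variables (H : R -> R -> R -> R) (u0 : R -> R).

Definition Bfun (x : R) : R := Hp H x (Derive u0 x) (u0 x).
Definition Hu0 (x : R) : R := Hu H x (Derive u0 x) (u0 x).

Definition mu : R :=
  RInt (fun t => Hu0 t / Bfun t) 0 1 / RInt (fun t => / Bfun t) 0 1.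

Definition rho (x : R) : R :=
  exp (RInt (fun t => (mu - Hu0 t) / Bfun t) 0 x).

Definition Zc : R := - RInt (fun t => / Bfun t) 0 1.

Definition Tper : R := Rabs Zc.

Definition ffun (x : R) : R := 2 * PI / Zc * RInt (fun t => - / Bfun t) 0 x.

Definition wfun (x0 eps x t : R) : R :=
  u0 x + eps * rho x
  + eps * rho x * sin (- (PI / 2) + ffun x - ffun x0 + 2 * PI / Zc * t).

End Quantities.

(* Main.v *)
Require Import Defs.
From Stdlib Require Import Reals Lra Lia Classical List.
From Coquelicot Require Import Coquelicot.
Open Scope R_scope.

Lemma abs_near (a b e : R) : Rabs (a - b) < e -> Rabs a <= Rabs b + e.
Proof.
  intros H. pose proof (Rabs_triang (a - b) b) as T.
  replace (a - b + b) with a in T by ring. lra.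
Qed.

Lemma cover (Q : R -> R -> Prop) (a b : R) :
  a <= b ->
  (forall c d c' d', Q c d -> c <= c' -> d' <= d -> Q c' d') ->
  (forall c d e, Q c d -> Q d e -> Q c e) ->
  (forall z, a <= z <= b -> exists del, 0 < del /\ Q (z - del) (z + del)) ->
  Q a b.
Proof.
  intros Hab Hmon Hun Hloc.
  set (E := fun s => a <= s <= b /\ Q a s).
  assert (Ea : E a).
  { destruct (Hloc a) as [d [Hd Hq]]; [lra|]. split; [lra|].
    apply (Hmon _ _ _ _ Hq); lra. }
  assert (Eb : bound E). { exists b. intros s [Hs _]. lra. }
  destruct (completeness E Eb (ex_intro _ a Ea)) as [m [Hub Hlub]].
  assert (Ham : a <= m) by (apply Hub; exact Ea).
  assert (Hmb : m <= b) by (apply Hlub; intros s [Hs _]; lra).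
  destruct (Hloc m) as [d [Hd Hq]]; [lra|].
  assert (Hs : exists s, E s /\ m - d < s).
  { apply Classical_Prop.NNPP; intro Hn.
    assert (m <= m - d); [|lra].
    apply Hlub. intros s Es. apply Rnot_lt_le. intro Hlt. apply Hn. exists s; auto. }
  destruct Hs as [s [[Hs1 Hs2] Hs3]].
  assert (Hsm : s <= m) by (apply Hub; split; auto).
  set (e := Rmin b (m + d / 2)).
  assert (Qse : Q s e).
  { apply (Hmon _ _ _ _ Hq); [lra|]. unfold e. pose proof (Rmin_r b (m + d/2)). lra. }
  assert (Qae : Q a e) by (eapply Hun; eauto).
  assert (He : E e).
  { split; [|exact Qae]. unfold e. split.
    - apply Rmin_glb; lra.
    - apply Rmin_l. }
  assert (Hem : e <= m) by (apply Hub; exact He).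
  unfold e in *. destruct (Rle_dec b (m + d/2)) as [Hle|Hlt].
  - rewrite Rmin_left in Qae by lra. exact Qae.
  - rewrite Rmin_right in Hem by lra. lra.
Qed.

Lemma box_bound (g : R -> R -> R -> R) :
  (forall x p v, continuous3 g x p v) ->
  forall a1 b1 a2 b2 a3 b3, exists M, forall x p v,
    a1 <= x <= b1 -> a2 <= p <= b2 -> a3 <= v <= b3 -> Rabs (g x p v) <= M.
Proof.
  intros Hc a1 b1 a2 b2 a3 b3.
  destruct (Rle_dec a3 b3) as [H3|H3];
    [|exists 0; intros; lra].
  destruct (Rle_dec a2 b2) as [H2|H2];
    [|exists 0; intros; lra].
  destruct (Rle_dec a1 b1) as [H1|H1];
    [|exists 0; intros; lra].
  assert (S1 : forall x p, exists del M, 0 < del /\ forall x' p' v',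
     Rabs (x' - x) < del -> Rabs (p' - p) < del -> a3 <= v' <= b3 -> Rabs (g x' p' v') <= M).
  { intros x p.
    set (Q := fun c d => exists del M, 0 < del /\ forall x' p' v',
     Rabs (x' - x) < del -> Rabs (p' - p) < del -> c <= v' <= d -> Rabs (g x' p' v') <= M).
    change (Q a3 b3). apply cover; auto.
    - intros c d c' d' [del [M [Hd HM]]] Hc' Hd'. exists del, M; split; auto.
      intros; apply HM; auto; lra.
    - intros c d e [d1 [M1 [Hd1 HM1]]] [d2 [M2 [Hd2 HM2]]].
      exists (Rmin d1 d2), (Rmax M1 M2). split; [apply Rmin_pos; auto|].
      intros x' p' v' Hx Hp Hv.
      pose proof (Rmin_l d1 d2). pose proof (Rmin_r d1 d2).
      pose proof (Rmax_l M1 M2). pose proof (Rmax_r M1 M2).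
      destruct (Rle_dec v' d).
      + assert (Rabs (g x' p' v') <= M1) by (apply HM1; lra). lra.
      + assert (Rabs (g x' p' v') <= M2) by (apply HM2; lra). lra.
    - intros z _. destruct (Hc x p z 1 Rlt_0_1) as [del [Hd HD]].
      exists (del/2). split; [lra|]. exists del, (Rabs (g x p z) + 1). split; auto.
      intros x' p' v' Hx Hp Hv. apply abs_near. apply HD; auto.
      apply Rabs_def1; lra. }
  assert (S2 : forall x, exists del M, 0 < del /\ forall x' p' v',
     Rabs (x' - x) < del -> a2 <= p' <= b2 -> a3 <= v' <= b3 -> Rabs (g x' p' v') <= M).
  { intros x.
    set (Q := fun c d => exists del M, 0 < del /\ forall x' p' v',
     Rabs (x' - x) < del -> c <= p' <= d -> a3 <= v' <= b3 -> Rabs (g x' p' v') <= M).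
    change (Q a2 b2). apply cover; auto.
    - intros c d c' d' [del [M [Hd HM]]] Hc' Hd'. exists del, M; split; auto.
      intros; apply HM; auto; lra.
    - intros c d e [d1 [M1 [Hd1 HM1]]] [d2 [M2 [Hd2 HM2]]].
      exists (Rmin d1 d2), (Rmax M1 M2). split; [apply Rmin_pos; auto|].
      intros x' p' v' Hx Hp Hv.
      pose proof (Rmin_l d1 d2). pose proof (Rmin_r d1 d2).
      pose proof (Rmax_l M1 M2). pose proof (Rmax_r M1 M2).
      destruct (Rle_dec p' d).
      + assert (Rabs (g x' p' v') <= M1) by (apply HM1; lra). lra.
      + assert (Rabs (g x' p' v') <= M2) by (apply HM2; lra). lra.
    - intros z _. destruct (S1 x z) as [del [M [Hd HM]]].
      exists (del/2). split; [lra|]. exists del, M. split; auto.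
      intros x' p' v' Hx Hp Hv. apply HM; auto. apply Rabs_def1; lra. }
  set (Q := fun c d => exists M, forall x' p' v',
     c <= x' <= d -> a2 <= p' <= b2 -> a3 <= v' <= b3 -> Rabs (g x' p' v') <= M).
  change (Q a1 b1). apply cover; auto.
  - intros c d c' d' [M HM] Hc' Hd'. exists M.
    intros; apply HM; auto; lra.
  - intros c d e [M1 HM1] [M2 HM2].
    exists (Rmax M1 M2).
    intros x' p' v' Hx Hp Hv.
    pose proof (Rmax_l M1 M2). pose proof (Rmax_r M1 M2).
    destruct (Rle_dec x' d).
    + assert (Rabs (g x' p' v') <= M1) by (apply HM1; lra). lra.
    + assert (Rabs (g x' p' v') <= M2) by (apply HM2; lra). lra.
  - intros z _. destruct (S2 z) as [del [M [Hd HM]]].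
    exists (del/2). split; [lra|]. exists M.
    intros x' p' v' Hx Hp Hv. apply HM; auto. apply Rabs_def1; lra.
Qed.

Lemma cont_eps (f : R -> R) (x : R) : continuous f x ->
  forall eps, 0 < eps -> exists del, 0 < del /\ forall y, Rabs (y - x) < del -> Rabs (f y - f x) < eps.
Proof.
  intros Hc eps He. apply continuity_pt_filterlim in Hc.
  destruct (Hc eps He) as [del [Hd HD]].
  exists del; split; auto. intros y Hy.
  destruct (Req_dec y x) as [->|Hne].
  - rewrite Rminus_eq_0, Rabs_R0. lra.
  - apply (HD y). split; [unfold D_x, no_cond; split; auto|]. exact Hy.
Qed.

Lemma eps_cont (f : R -> R) (x : R) :
  (forall eps, 0 < eps -> exists del, 0 < del /\ forall y, Rabs (y - x) < del -> Rabs (f y - f x) < eps) ->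
  continuous f x.
Proof.
  intros H. apply continuity_pt_filterlim. intros eps He.
  destruct (H eps He) as [d [Hd HD]]. exists d; split; auto.
  intros y [_ Hy]. apply HD. exact Hy.
Qed.

Lemma evt_max (f : R -> R) (a b : R) : a <= b ->
  (forall c, a <= c <= b -> continuous f c) ->
  exists m, a <= m <= b /\ forall c, a <= c <= b -> f c <= f m.
Proof.
  intros Hab Hc. destruct (continuity_ab_maj f a b Hab) as [m [H1 H2]].
  - intros c Hc'. apply continuity_pt_filterlim. apply Hc; auto.
  - exists m; auto.
Qed.

Lemma evt_min (f : R -> R) (a b : R) : a <= b ->
  (forall c, a <= c <= b -> continuous f c) ->
  exists m, a <= m <= b /\ forall c, a <= c <= b -> f m <= f c.
Proof.
  intros Hab Hc. destruct (continuity_ab_min f a b Hab) as [m [H1 H2]].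
  - intros c Hc'. apply continuity_pt_filterlim. apply Hc; auto.
  - exists m; auto.
Qed.

Lemma interior_max (f : R -> R) (a b m : R) : a < m < b ->
  (forall c, a <= c <= b -> f c <= f m) -> local_max_at f m.
Proof.
  intros Hm H. exists (Rmin (m - a) (b - m)). split.
  - apply Rmin_pos; lra.
  - intros y Hy. pose proof (Rmin_l (m - a) (b - m)). pose proof (Rmin_r (m - a) (b - m)).
    apply Rabs_def2 in Hy. apply H. lra.
Qed.

Lemma interior_min (f : R -> R) (a b m : R) : a < m < b ->
  (forall c, a <= c <= b -> f m <= f c) -> local_min_at f m.
Proof.
  intros Hm H. exists (Rmin (m - a) (b - m)). split.
  - apply Rmin_pos; lra.
  - intros y Hy. pose proof (Rmin_l (m - a) (b - m)). pose proof (Rmin_r (m - a) (b - m)).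
    apply Rabs_def2 in Hy. apply H. lra.
Qed.

Lemma per_Z (f : R -> R) : (forall x, f (x + 1) = f x) ->
  forall n x, f (x + IZR n) = f x.
Proof.
  intros Hp n. induction n using Z.peano_ind; intro x.
  - rewrite Rplus_0_r; auto.
  - rewrite succ_IZR. replace (x + (IZR n + 1)) with ((x + IZR n) + 1) by ring.
    rewrite Hp; auto.
  - assert (E : IZR n = IZR (Z.pred n) + 1) by (rewrite <- succ_IZR, Z.succ_pred; auto).
    rewrite <- Hp. replace (x + IZR (Z.pred n) + 1) with (x + IZR n) by lra. apply IHn.
Qed.

Lemma reduce01 (x : R) : exists y n, 0 <= y <= 1 /\ x = y + IZR n.
Proof.
  destruct (archimed x) as [H1 H2].
  exists (x - IZR (up x - 1)), (up x - 1)%Z. rewrite minus_IZR. split; [|ring].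
  simpl. lra.
Qed.

Lemma per_reduce (f : R -> R) : (forall x, f (x + 1) = f x) ->
  forall x, exists y, 0 <= y <= 1 /\ f x = f y.
Proof.
  intros Hp x. destruct (reduce01 x) as [y [n [Hy ->]]]. exists y; split; auto.
  apply per_Z; auto.
Qed.

Lemma per_bound (f : R -> R) : (forall x, f (x + 1) = f x) ->
  (forall x, 0 <= x <= 1 -> continuous f x) ->
  exists M, forall x, Rabs (f x) <= M.
Proof.
  intros Hp Hc.
  destruct (evt_max (fun x => Rabs (f x)) 0 1) as [m [Hm HM]]; [lra| |].
  - intros c Hc'. apply continuous_comp; [apply Hc; auto|].
    apply continuous_Rabs.
  - exists (Rabs (f m)). intros x. destruct (per_reduce f Hp x) as [y [Hy ->]]. apply HM; auto.
Qed.

Lemma per_lbound (f : R -> R) : (forall x, f (x + 1) = f x) ->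
  (forall x, 0 <= x <= 1 -> continuous f x) -> (forall x, f x <> 0) ->
  exists m, 0 < m /\ forall x, m <= Rabs (f x).
Proof.
  intros Hp Hc Hn.
  destruct (evt_min (fun x => Rabs (f x)) 0 1) as [m [Hm HM]]; [lra| |].
  - intros c Hc'. apply continuous_comp; [apply Hc; auto|].
    apply continuous_Rabs.
  - exists (Rabs (f m)). split; [apply Rabs_pos_lt; auto|].
    intros x. destruct (per_reduce f Hp x) as [y [Hy ->]]. apply HM; auto.
Qed.

Definition quadf (c p k x1 : R) : R -> R := fun y => c + p * (y - x1) + k * ((y - x1) * (y - x1)).

Lemma quadf_derive (c p k x1 y : R) : is_derive (quadf c p k x1) y (p + 2 * k * (y - x1)).
Proof.
  unfold quadf. auto_derive; auto. ring.
Qed.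

Lemma quadf_C1 (c p k x1 : R) : Defs.C1 (quadf c p k x1) /\ forall y, Derive (quadf c p k x1) y = p + 2 * k * (y - x1).
Proof.
  assert (HD : forall y, Derive (quadf c p k x1) y = p + 2 * k * (y - x1)).
  { intro y. apply is_derive_unique, quadf_derive. }
  split; auto. split.
  - intro y. eexists. apply quadf_derive.
  - intro y. apply (continuous_ext (fun y => p + 2 * k * (y - x1))).
    + intro t. rewrite HD; auto.
    + apply continuity_pt_filterlim. apply derivable_continuous_pt.
      apply derivable_pt_plus; [apply derivable_pt_const|].
      apply derivable_pt_scal. apply derivable_pt_minus; [apply derivable_pt_id|apply derivable_pt_const].
Qed.

Lemma exd_cont (f : R -> R) (x : R) : ex_derive f x -> continuous f x.
Proof. intros H. apply (ex_derive_continuous (K := R_AbsRing) (V := R_NormedModule)); exact H. Qed.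

Lemma right_deriv_generic (v : R -> R) (G : R -> R -> R) (z0 L : R) :
  (forall y, continuous v y) ->
  (forall p eps, 0 < eps -> exists del, 0 < del /\ forall z, Rabs (z - z0) < del -> Rabs (G z p - G z0 p) < eps) ->
  (forall z p, local_max_at (fun y => v y - p * y) z -> G z p <= 0) ->
  (forall z p, local_min_at (fun y => v y - p * y) z -> 0 <= G z p) ->
  (forall a b c, a < b -> b < c -> G z0 a = 0 -> G z0 b = 0 -> G z0 c = 0 -> False) ->
  (forall h, 0 < h <= 1 -> Rabs (v (z0 + h) - v z0) <= L * h) ->
  exists d, forall eps, 0 < eps -> exists del, 0 < del /\ forall h, 0 < h < del ->
     Rabs (v (z0 + h) - v z0 - d * h) <= eps * h.
Proof.
  intros Hv HG Hmax Hmin H3 HL.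
  set (g := fun p y => v y - p * y).
  set (A := fun p => forall del, 0 < del -> exists h, 0 < h < del /\ v (z0 + h) - v z0 > p * h).
  set (B := fun p => forall del, 0 < del -> exists h, 0 < h < del /\ v (z0 + h) - v z0 < p * h).
  assert (Hgc : forall p y, continuous (g p) y).
  { intros p y. unfold g. apply (continuous_minus v (fun y => p * y)); auto.
    apply ex_derive_continuous; auto_derive; auto. }
  assert (Cross : forall p, A p -> B p -> G z0 p = 0).
  { intros p HA HB.
    destruct (Rtotal_order (G z0 p) 0) as [Hlt|[Heq|Hgt]]; auto; exfalso.
    - destruct (HG p (- G z0 p)) as [del [Hd HD]]; [lra|].
      assert (Hneg : forall z, Rabs (z - z0) < del -> G z p < 0).
      { intros z Hz. specialize (HD z Hz). apply Rabs_def2 in HD. lra. }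
      destruct (HA del Hd) as [h1 [Hh1 E1]].
      destruct (HB h1) as [h2 [Hh2 E2]]; [lra|].
      destruct (HA h2) as [h3 [Hh3 E3]]; [lra|].
      destruct (evt_min (g p) (z0 + h3) (z0 + h1)) as [m [Hm HM]]; [lra|intros; apply Hgc|].
      assert (Hg2 : g p m <= g p (z0 + h2)) by (apply HM; lra).
      unfold g in *.
      assert (z0 + h3 < m < z0 + h1).
      { split; apply Rnot_le_lt; intro Hle.
        - assert (m = z0 + h3) by lra. subst m. lra.
        - assert (m = z0 + h1) by lra. subst m. lra. }
      assert (Hl : local_min_at (fun y => v y - p * y) m).
      { apply (interior_min _ (z0 + h3) (z0 + h1)); auto. }
      apply Hmin in Hl. assert (G m p < 0) by (apply Hneg; apply Rabs_def1; lra). lra.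
    - destruct (HG p (G z0 p)) as [del [Hd HD]]; [lra|].
      assert (Hpos : forall z, Rabs (z - z0) < del -> 0 < G z p).
      { intros z Hz. specialize (HD z Hz). apply Rabs_def2 in HD. lra. }
      destruct (HB del Hd) as [h1 [Hh1 E1]].
      destruct (HA h1) as [h2 [Hh2 E2]]; [lra|].
      destruct (HB h2) as [h3 [Hh3 E3]]; [lra|].
      destruct (evt_max (g p) (z0 + h3) (z0 + h1)) as [m [Hm HM]]; [lra|intros; apply Hgc|].
      assert (Hg2 : g p (z0 + h2) <= g p m) by (apply HM; lra).
      unfold g in *.
      assert (z0 + h3 < m < z0 + h1).
      { split; apply Rnot_le_lt; intro Hle.
        - assert (m = z0 + h3) by lra. subst m. lra.
        - assert (m = z0 + h1) by lra. subst m. lra. }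
      assert (Hl : local_max_at (fun y => v y - p * y) m).
      { apply (interior_max _ (z0 + h3) (z0 + h1)); auto. }
      apply Hmax in Hl. assert (0 < G m p) by (apply Hpos; apply Rabs_def1; lra). lra. }
  assert (HL' : forall h, 0 < h <= 1 -> - (L * h) <= v (z0 + h) - v z0 <= L * h).
  { intros h Hh. specialize (HL h Hh). apply Rabs_le_between' in HL. lra. }
  assert (Adown : forall p p', A p -> p' <= p -> A p').
  { intros p p' HA Hp del Hd. destruct (HA del Hd) as [h [Hh E]]. exists h; split; auto. nra. }
  assert (Bup : forall p p', B p -> p <= p' -> B p').
  { intros p p' HB Hp del Hd. destruct (HB del Hd) as [h [Hh E]]. exists h; split; auto. nra. }
  assert (Ane : A (- L - 1)).
  { intros del Hd. exists (Rmin del 1 / 2).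
    pose proof (Rmin_l del 1). pose proof (Rmin_r del 1).
    assert (0 < Rmin del 1) by (apply Rmin_pos; lra).
    split; [lra|]. specialize (HL' (Rmin del 1 / 2)). nra. }
  assert (Abd : bound A).
  { exists L. intros p HA. apply Rnot_lt_le. intro Hlt.
    destruct (HA 1 Rlt_0_1) as [h [Hh E]]. specialize (HL' h). nra. }
  destruct (completeness A Abd (ex_intro _ _ Ane)) as [c [Hub Hlub]].
  assert (Abelow : forall p, p < c -> A p).
  { intros p Hp. apply NNPP. intro HnA.
    assert (c <= p); [|lra]. apply Hlub. intros a Ha. apply Rnot_lt_le. intro Hlt.
    apply HnA. apply (Adown a); auto; lra. }
  assert (NB : forall e, 0 < e -> ~ B (c - e)).
  { intros e He HB.
    apply (H3 (c - 3 * e / 4) (c - e / 2) (c - e / 4)); try lra;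
    apply Cross; try (apply Abelow; lra); apply (Bup (c - e)); auto; lra. }
  assert (NA : forall e, 0 < e -> ~ A (c + e)).
  { intros e He HA. specialize (Hub _ HA). lra. }
  exists c. intros eps He.
  assert (He2 : 0 < eps / 2) by lra.
  pose proof (NA _ He2) as NA1. pose proof (NB _ He2) as NB1.
  unfold A in NA1. unfold B in NB1.
  apply not_all_ex_not in NA1. destruct NA1 as [d1 NA1].
  apply imply_to_and in NA1. destruct NA1 as [Hd1 NA1].
  apply not_all_ex_not in NB1. destruct NB1 as [d2 NB1].
  apply imply_to_and in NB1. destruct NB1 as [Hd2 NB1].
  exists (Rmin d1 d2). split; [apply Rmin_pos; auto|].
  intros h Hh. pose proof (Rmin_l d1 d2). pose proof (Rmin_r d1 d2).
  assert (E1 : v (z0 + h) - v z0 <= (c + eps / 2) * h).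
  { apply Rnot_lt_le. intro Hlt. apply NA1. exists h. split; [lra|]. lra. }
  assert (E2 : (c - eps / 2) * h <= v (z0 + h) - v z0).
  { apply Rnot_lt_le. intro Hlt. apply NB1. exists h. split; [lra|]. lra. }
  apply Rabs_le. nra.
Qed.

Section Convex.
Variables (phi dphi ddphi : R -> R).
Hypothesis Hd1 : forall q, is_derive phi q (dphi q).
Hypothesis Hd2 : forall q, is_derive dphi q (ddphi q).
Hypothesis Hpos : forall q, 0 < ddphi q.

Lemma mvt_of (f df : R -> R) (a b : R) : (forall q, is_derive f q (df q)) -> a < b ->
  exists c, a <= c <= b /\ f b - f a = df c * (b - a).
Proof.
  intros Hd Hab. destruct (MVT_gen f a b df) as [c [Hc E]].
  - intros; apply Hd.
  - intros; apply continuity_pt_filterlim. apply exd_cont. eexists; apply Hd.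
  - rewrite Rmin_left, Rmax_right in Hc by lra. exists c; auto.
Qed.

Lemma dphi_incr (a b : R) : a < b -> dphi a < dphi b.
Proof.
  intros Hab. destruct (mvt_of dphi ddphi a b Hd2 Hab) as [c [Hc E]].
  specialize (Hpos c). nra.
Qed.

Lemma dphi_mono (a b : R) : a <= b -> dphi a <= dphi b.
Proof.
  intros Hab. destruct (Req_dec a b) as [->|Hne]; [lra|]. left; apply dphi_incr; lra.
Qed.

Lemma tangent_lo (a b : R) : a < b -> dphi a * (b - a) < phi b - phi a.
Proof.
  intros Hab. set (m := (a + b) / 2).
  destruct (mvt_of phi dphi a m Hd1) as [c1 [Hc1 E1]]; [unfold m; lra|].
  destruct (mvt_of phi dphi m b Hd1) as [c2 [Hc2 E2]]; [unfold m; lra|].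
  assert (dphi a <= dphi c1) by (apply dphi_mono; lra).
  assert (dphi a < dphi c2) by (apply dphi_incr; unfold m in *; lra).
  assert (m - a > 0) by (unfold m; lra). assert (b - m > 0) by (unfold m; lra).
  replace (phi b - phi a) with ((phi m - phi a) + (phi b - phi m)) by ring.
  rewrite E1, E2. replace (b - a) with ((m - a) + (b - m)) by ring. nra.
Qed.

Lemma tangent_hi (a b : R) : a < b -> phi b - phi a < dphi b * (b - a).
Proof.
  intros Hab. set (m := (a + b) / 2).
  destruct (mvt_of phi dphi a m Hd1) as [c1 [Hc1 E1]]; [unfold m; lra|].
  destruct (mvt_of phi dphi m b Hd1) as [c2 [Hc2 E2]]; [unfold m; lra|].
  assert (dphi c1 < dphi b) by (apply dphi_incr; unfold m in *; lra).
  assert (dphi c2 <= dphi b) by (apply dphi_mono; lra).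
  assert (m - a > 0) by (unfold m; lra). assert (b - m > 0) by (unfold m; lra).
  replace (phi b - phi a) with ((phi m - phi a) + (phi b - phi m)) by ring.
  rewrite E1, E2. replace (b - a) with ((m - a) + (b - m)) by ring. nra.
Qed.

Lemma tangent (a b : R) : a <> b -> phi a + dphi a * (b - a) < phi b.
Proof.
  intros Hne. destruct (Rlt_or_le a b) as [H|H].
  - pose proof (tangent_lo a b H). lra.
  - assert (b < a) by lra. pose proof (tangent_hi b a H0). nra.
Qed.

Lemma convex_between (a m b : R) : a < m -> m < b ->
  phi m * (b - a) < (b - m) * phi a + (m - a) * phi b.
Proof.
  intros H1 H2.
  pose proof (tangent m a ltac:(lra)) as T1.
  pose proof (tangent m b ltac:(lra)) as T2.
  assert (A1 : (b - m) * (phi m + dphi m * (a - m)) < (b - m) * phi a)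
    by (apply Rmult_lt_compat_l; lra).
  assert (A2 : (m - a) * (phi m + dphi m * (b - m)) < (m - a) * phi b)
    by (apply Rmult_lt_compat_l; lra).
  nra.
Qed.

Lemma three_roots (a b c : R) : a < b -> b < c -> phi a = 0 -> phi b = 0 -> phi c = 0 -> False.
Proof.
  intros H1 H2 Ea Eb Ec. pose proof (convex_between a b c H1 H2). rewrite Ea, Eb, Ec in H. lra.
Qed.

Lemma sign_near_root (d : R) : phi d = 0 -> dphi d < 0 ->
  forall eps, 0 < eps -> exists t, 0 < t < eps /\ phi (d + t) < 0 /\ 0 < phi (d - t).
Proof.
  intros E Hn eps He. pose proof (Hd1 d) as D. apply is_derive_Reals in D.
  destruct (D (- dphi d / 2)) as [del Hdel]; [lra|].
  set (t := Rmin del eps / 2).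
  assert (0 < Rmin del eps) by (apply Rmin_pos; [apply cond_pos|lra]).
  pose proof (Rmin_l del eps). pose proof (Rmin_r del eps).
  assert (Ht : 0 < t) by (unfold t; lra).
  exists t. split; [unfold t; lra|].
  assert (A1 := Hdel t ltac:(lra) ltac:(rewrite Rabs_pos_eq; unfold t; lra)).
  assert (A2 := Hdel (- t) ltac:(lra) ltac:(rewrite Rabs_Ropp, Rabs_pos_eq; unfold t; lra)).
  rewrite E in A1, A2. rewrite Rminus_0_r in A1, A2.
  apply Rabs_def2 in A1. apply Rabs_def2 in A2.
  replace (d + - t) with (d - t) in A2 by ring.
  split.
  - assert (phi (d + t) / t < 0) by lra.
    apply Rnot_le_lt. intro Hle. assert (0 <= phi (d + t) / t).
    { unfold Rdiv. apply Rmult_le_pos; [lra|]. left; apply Rinv_0_lt_compat; lra. } lra.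
  - assert (phi (d - t) / - t < 0) by lra.
    apply Rnot_le_lt. intro Hle.
    assert (0 <= phi (d - t) / - t).
    { unfold Rdiv. rewrite <- Ropp_inv_permute by lra.
      replace (phi (d - t) * - / t) with ((- phi (d - t)) * / t) by ring.
      apply Rmult_le_pos; [lra|]. left; apply Rinv_0_lt_compat; lra. } lra.
Qed.

Lemma sign_near_root' (d : R) : phi d = 0 -> 0 < dphi d ->
  forall eps, 0 < eps -> exists t, 0 < t < eps /\ 0 < phi (d + t) /\ phi (d - t) < 0.
Proof.
  intros E Hn eps He. pose proof (Hd1 d) as D. apply is_derive_Reals in D.
  destruct (D (dphi d / 2)) as [del Hdel]; [lra|].
  set (t := Rmin del eps / 2).
  assert (0 < Rmin del eps) by (apply Rmin_pos; [apply cond_pos|lra]).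
  pose proof (Rmin_l del eps). pose proof (Rmin_r del eps).
  assert (Ht : 0 < t) by (unfold t; lra).
  exists t. split; [unfold t; lra|].
  assert (A1 := Hdel t ltac:(lra) ltac:(rewrite Rabs_pos_eq; unfold t; lra)).
  assert (A2 := Hdel (- t) ltac:(lra) ltac:(rewrite Rabs_Ropp, Rabs_pos_eq; unfold t; lra)).
  rewrite E in A1, A2. rewrite Rminus_0_r in A1, A2.
  apply Rabs_def2 in A1. apply Rabs_def2 in A2.
  replace (d + - t) with (d - t) in A2 by ring.
  split.
  - assert (0 < phi (d + t) / t) by lra.
    apply Rnot_le_lt. intro Hle. assert (phi (d + t) / t <= 0).
    { unfold Rdiv. assert (0 <= (- phi (d + t)) * / t).
      { apply Rmult_le_pos; [lra|]. left; apply Rinv_0_lt_compat; lra. } lra. } lra.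
  - assert (0 < phi (d - t) / - t) by lra.
    apply Rnot_le_lt. intro Hle.
    assert (phi (d - t) / - t <= 0).
    { unfold Rdiv. rewrite <- Ropp_inv_permute by lra.
      assert (0 <= phi (d - t) * / t).
      { apply Rmult_le_pos; [lra|]. left; apply Rinv_0_lt_compat; lra. } lra. } lra.
Qed.

End Convex.

Lemma jc_comp (g : R -> R -> R -> R) (u : R -> R) :
  (forall x p v, continuous3 g x p v) -> (forall y, continuous u y) ->
  forall z p eps, 0 < eps -> exists del, 0 < del /\ forall z' p',
    Rabs (z' - z) < del -> Rabs (p' - p) < del -> Rabs (g z' p' (u z') - g z p (u z)) < eps.
Proof.
  intros Hg Hu z p eps He.
  destruct (Hg z p (u z) eps He) as [d1 [Hd1 HD1]].
  destruct (cont_eps u z (Hu z) d1 Hd1) as [d2 [Hd2 HD2]].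
  exists (Rmin d1 d2). split; [apply Rmin_pos; auto|].
  pose proof (Rmin_l d1 d2). pose proof (Rmin_r d1 d2).
  intros z' p' Hz Hp. apply HD1; try lra. apply HD2. lra.
Qed.

Section Reg.
Variables (H : R -> R -> R -> R) (u : R -> R).
Hypothesis Hsm : smooth3 H.
Hypothesis Hper : forall x p v, H (x + 1) p v = H x p v.
Hypothesis Hconv : forall x p v, 0 < Hpp H x p v.
Hypothesis Hsl : superlinear_p H.
Hypothesis Hvisc : viscosity_solution H u.
Hypothesis Hnd : forall x, ex_derive u x -> Hp H x (Derive u x) (u x) <> 0.

Local Notation F z p := (H z p (u z)).

Lemma u_per : forall x, u (x + 1) = u x.
Proof. destruct Hvisc as [P _]. exact P. Qed.

Lemma u_cont : forall y, continuous u y.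
Proof. destruct Hvisc as [_ [P _]]. exact P. Qed.

Lemma u_sub : forall phi x, Defs.C1 phi -> local_max_at (fun y => u y - phi y) x ->
     H x (Derive phi x) (u x) <= 0.
Proof. destruct Hvisc as [_ [_ [P _]]]. exact P. Qed.

Lemma u_super : forall phi x, Defs.C1 phi -> local_min_at (fun y => u y - phi y) x ->
     0 <= H x (Derive phi x) (u x).
Proof. destruct Hvisc as [_ [_ [_ P]]]. exact P. Qed.

Lemma H_c3 : forall x p v, continuous3 H x p v.
Proof. exact (proj1 (Hsm nil)). Qed.

Lemma Hp_c3 : forall x p v, continuous3 (Hp H) x p v.
Proof. exact (proj1 (Hsm (1%nat :: nil))). Qed.

Lemma H_der : forall x q v, is_derive (fun q => H x q v) q (Hp H x q v).
Proof.
  intros x q v. pose proof (proj2 (Hsm nil) 1%nat x q v) as E. simpl in E.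
  apply Derive_correct in E. exact E.
Qed.

Lemma Hp_der : forall x q v, is_derive (fun q => Hp H x q v) q (Hpp H x q v).
Proof.
  intros x q v. pose proof (proj2 (Hsm (1%nat :: nil)) 1%nat x q v) as E. simpl in E.
  apply Derive_correct in E. exact E.
Qed.

Lemma Fjc : forall z p eps, 0 < eps -> exists del, 0 < del /\ forall z' p',
    Rabs (z' - z) < del -> Rabs (p' - p) < del -> Rabs (F z' p' - F z p) < eps.
Proof. apply jc_comp; [apply H_c3|apply u_cont]. Qed.

Lemma Fjc_pos : forall z p, 0 < F z p -> exists del, 0 < del /\ forall z' p',
    Rabs (z' - z) < del -> Rabs (p' - p) < del -> 0 < F z' p'.
Proof.
  intros z p Hz. destruct (Fjc z p (F z p) Hz) as [d [Hd HD]]. exists d; split; auto.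
  intros z' p' H1 H2. specialize (HD z' p' H1 H2). apply Rabs_def2 in HD. lra.
Qed.

Lemma Fjc_neg : forall z p, F z p < 0 -> exists del, 0 < del /\ forall z' p',
    Rabs (z' - z) < del -> Rabs (p' - p) < del -> F z' p' < 0.
Proof.
  intros z p Hz. destruct (Fjc z p (- F z p)) as [d [Hd HD]]; [lra|]. exists d; split; auto.
  intros z' p' H1 H2. specialize (HD z' p' H1 H2). apply Rabs_def2 in HD. lra.
Qed.

Lemma F_tangent : forall z a b, a <> b -> F z a + Hp H z a (u z) * (b - a) < F z b.
Proof.
  intros z. apply (tangent (fun q => F z q) (fun q => Hp H z q (u z)) (fun q => Hpp H z q (u z))).
  - intros; apply H_der. - intros; apply Hp_der. - intros; apply Hconv.
Qed.

Lemma F_between : forall z a m b, a < m -> m < b ->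
  F z m * (b - a) < (b - m) * F z a + (m - a) * F z b.
Proof.
  intros z. apply (convex_between (fun q => F z q) (fun q => Hp H z q (u z)) (fun q => Hpp H z q (u z))).
  - intros; apply H_der. - intros; apply Hp_der. - intros; apply Hconv.
Qed.

Lemma F_three : forall z a b c, a < b -> b < c -> F z a = 0 -> F z b = 0 -> F z c = 0 -> False.
Proof.
  intros z. apply (three_roots (fun q => F z q) (fun q => Hp H z q (u z)) (fun q => Hpp H z q (u z))).
  - intros; apply H_der. - intros; apply Hp_der. - intros; apply Hconv.
Qed.

Lemma F_sign_neg : forall z d, F z d = 0 -> Hp H z d (u z) < 0 ->
  forall eps, 0 < eps -> exists t, 0 < t < eps /\ F z (d + t) < 0 /\ 0 < F z (d - t).
Proof.
  intros z. apply (sign_near_root (fun q => F z q) (fun q => Hp H z q (u z))).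
  intros; apply H_der.
Qed.

Lemma F_sign_pos : forall z d, F z d = 0 -> 0 < Hp H z d (u z) ->
  forall eps, 0 < eps -> exists t, 0 < t < eps /\ 0 < F z (d + t) /\ F z (d - t) < 0.
Proof.
  intros z. apply (sign_near_root' (fun q => F z q) (fun q => Hp H z q (u z))).
  intros; apply H_der.
Qed.

Lemma F_per : forall z p, F (z + 1) p = F z p.
Proof. intros. rewrite u_per, Hper. auto. Qed.

Lemma u_bound : exists M, forall x, Rabs (u x) <= M.
Proof. apply per_bound; [apply u_per|intros; apply u_cont]. Qed.

Lemma coercive : exists K, 0 < K /\ forall z p, K <= Rabs p -> 0 < F z p.
Proof.
  assert (Hloc : exists K, 0 < K /\ forall z p, 0 <= z <= 1 -> K <= Rabs p -> 0 < F z p).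
  { set (Q := fun c d => exists K, 0 < K /\ forall z p, c <= z <= d -> K <= Rabs p -> 0 < F z p).
    change (Q 0 1). apply cover; [lra| | |].
    - intros c d c' d' [K [HK HQ]] H1 H2. exists K; split; auto. intros; apply HQ; auto; lra.
    - intros c d e [K1 [HK1 HQ1]] [K2 [HK2 HQ2]]. exists (Rmax K1 K2).
      pose proof (Rmax_l K1 K2). pose proof (Rmax_r K1 K2). split; [lra|].
      intros z p Hz Hp. destruct (Rle_dec z d).
      + apply HQ1; auto; lra.
      + apply HQ2; auto; lra.
    - intros z0 _.
      set (M := Rabs (F z0 0) + 2).
      destruct (Hsl z0 (u z0) M) as [R0 HR0].
      set (P := Rmax R0 1).
      assert (HP1 : 1 <= P) by apply Rmax_r.
      assert (HPR : R0 <= P) by apply Rmax_l.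
      assert (FP : M * P <= F z0 P).
      { specialize (HR0 P). rewrite Rabs_pos_eq in HR0 by lra. apply HR0. lra. }
      assert (FmP : M * P <= F z0 (- P)).
      { specialize (HR0 (- P)). rewrite Rabs_Ropp, Rabs_pos_eq in HR0 by lra. apply HR0. lra. }
      assert (HM : 0 < M) by (unfold M; pose proof (Rabs_pos (F z0 0)); lra).
      assert (M * 1 <= M * P) by (apply Rmult_le_compat_l; lra).
      assert (FP' : M <= F z0 P) by lra.
      assert (FmP' : M <= F z0 (- P)) by lra.
      destruct (Fjc z0 P (1/2)) as [d1 [Hd1 HD1]]; [lra|].
      destruct (Fjc z0 (- P) (1/2)) as [d2 [Hd2 HD2]]; [lra|].
      destruct (Fjc z0 0 (1/2)) as [d3 [Hd3 HD3]]; [lra|].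
      pose proof (Rmin_l d1 (Rmin d2 d3)). pose proof (Rmin_r d1 (Rmin d2 d3)).
      pose proof (Rmin_l d2 d3). pose proof (Rmin_r d2 d3).
      assert (Hd : 0 < Rmin d1 (Rmin d2 d3)) by (repeat apply Rmin_pos; auto).
      set (d := Rmin d1 (Rmin d2 d3)) in *.
      exists (d / 2). split; [lra|]. exists P. split; [lra|].
      intros z p Hz Hp.
      assert (Hzz : Rabs (z - z0) < d) by (apply Rabs_def1; lra).
      assert (Z1 : Rabs (z - z0) < d1) by lra.
      assert (Z2 : Rabs (z - z0) < d2) by lra.
      assert (Z3 : Rabs (z - z0) < d3) by lra.
      assert (A1 := HD1 z P Z1 ltac:(rewrite Rminus_eq_0, Rabs_R0; lra)).
      assert (A2 := HD2 z (- P) Z2 ltac:(rewrite Rminus_eq_0, Rabs_R0; lra)).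
      assert (A3 := HD3 z 0 Z3 ltac:(rewrite Rminus_eq_0, Rabs_R0; lra)).
      apply Rabs_def2 in A1. apply Rabs_def2 in A2. apply Rabs_def2 in A3.
      pose proof (Rabs_pos (F z0 0)). pose proof (Rle_abs (F z0 0)).
      unfold M in *.
      destruct (Rle_or_lt 0 p) as [Hp0|Hp0].
      + rewrite Rabs_pos_eq in Hp by lra.
        destruct (Req_dec p P) as [->|Hne]; [lra|].
        pose proof (F_between z 0 P p ltac:(lra) ltac:(lra)). nra.
      + rewrite Rabs_left in Hp by lra.
        destruct (Req_dec p (- P)) as [->|Hne]; [lra|].
        pose proof (F_between z p (- P) 0 ltac:(lra) ltac:(lra)). nra. }
  destruct Hloc as [K [HK HQ]]. exists K. split; auto.
  intros z p Hp. destruct (per_reduce (fun z => F z p) (fun z => F_per z p) z) as [y [Hy E]].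
  simpl in E. rewrite E. apply HQ; auto.
Qed.


Lemma lmax_ext (f g : R -> R) z : (forall y, f y = g y) -> local_max_at f z -> local_max_at g z.
Proof. intros E [r [Hr HR]]. exists r; split; auto. intros y Hy. rewrite <- !E. auto. Qed.

Lemma lmin_ext (f g : R -> R) z : (forall y, f y = g y) -> local_min_at f z -> local_min_at g z.
Proof. intros E [r [Hr HR]]. exists r; split; auto. intros y Hy. rewrite <- !E. auto. Qed.

Lemma sub_lin : forall z p c x1, local_max_at (fun y => u y - (c + p * (y - x1))) z -> F z p <= 0.
Proof.
  intros z p c x1 Hl. destruct (quadf_C1 c p 0 x1) as [HC HD].
  assert (E := u_sub _ z HC). rewrite HD in E. replace (p + 2 * 0 * (z - x1)) with p in E by ring.
  apply E. eapply lmax_ext; [|exact Hl]. intros y. unfold quadf. simpl. ring.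
Qed.

Lemma super_lin : forall z p c x1, local_min_at (fun y => u y - (c + p * (y - x1))) z -> 0 <= F z p.
Proof.
  intros z p c x1 Hl. destruct (quadf_C1 c p 0 x1) as [HC HD].
  assert (E := u_super _ z HC). rewrite HD in E. replace (p + 2 * 0 * (z - x1)) with p in E by ring.
  apply E. eapply lmin_ext; [|exact Hl]. intros y. unfold quadf. simpl. ring.
Qed.

Lemma lip : exists L, 0 < L /\ forall x y, Rabs (y - x) <= 1 -> Rabs (u y - u x) <= L * Rabs (y - x).
Proof.
  destruct coercive as [K [HK HKp]]. destruct u_bound as [M0 HM0].
  assert (HM0p : 0 <= M0) by (pose proof (HM0 0); pose proof (Rabs_pos (u 0)); lra).
  set (L := K + 2 * M0 + 1).
  assert (Up : forall x0 y, Rabs (y - x0) <= 1 -> u y <= u x0 + L * Rabs (y - x0)).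
  { intros x0 y Hy.
    set (g := fun y => u y - L * Rabs (y - x0)).
    destruct (evt_max g (x0 - 1) (x0 + 1)) as [m [Hm HM]]; [lra| |].
    { intros c _. unfold g. apply (continuous_minus u (fun y => L * Rabs (y - x0))); [apply u_cont|].
      apply (continuous_scal_r L (fun y => Rabs (y - x0))).
      apply (continuous_comp (fun y => y - x0) Rabs).
      - apply exd_cont. auto_derive. auto.
      - apply continuous_Rabs. }
    assert (Hgx0 : g x0 <= g m) by (apply HM; lra).
    unfold g in Hgx0. rewrite Rminus_eq_0, Rabs_R0 in Hgx0.
    pose proof (HM0 m) as B1. pose proof (HM0 x0) as B2.
    apply Rabs_le_between in B1. apply Rabs_le_between in B2.
    assert (HLK : K <= L) by (unfold L; lra).
    destruct (Rtotal_order m x0) as [Hlt|[Heq|Hgt]].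
    - exfalso.
      assert (Hm1 : x0 - 1 < m).
      { apply Rnot_le_lt; intro Hle. assert (m = x0 - 1) by lra. subst m.
        replace (Rabs (x0 - 1 - x0)) with 1 in Hgx0 by (rewrite Rabs_left1; lra).
        unfold L in Hgx0. lra. }
      assert (Hl : local_max_at (fun y => u y - (0 + (- L) * (y - x0))) m).
      { apply (interior_max _ (x0 - 1) x0); [lra|]. intros c Hc.
        assert (Hg : g c <= g m) by (apply HM; lra). unfold g in Hg.
        rewrite (Rabs_left1 (c - x0)) in Hg by lra. rewrite (Rabs_left1 (m - x0)) in Hg by lra. lra. }
      apply sub_lin in Hl. assert (0 < F m (- L)); [|lra]. apply HKp.
      rewrite Rabs_Ropp, Rabs_pos_eq by lra. lra.
    - subst m. assert (Hg : g y <= g x0) by (apply HM; apply Rabs_le_between' in Hy; lra).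
      unfold g in Hg. rewrite Rminus_eq_0, Rabs_R0 in Hg. lra.
    - exfalso.
      assert (Hm1 : m < x0 + 1).
      { apply Rnot_le_lt; intro Hle. assert (m = x0 + 1) by lra. subst m.
        replace (Rabs (x0 + 1 - x0)) with 1 in Hgx0 by (rewrite Rabs_pos_eq; lra).
        unfold L in Hgx0. lra. }
      assert (Hl : local_max_at (fun y => u y - (0 + L * (y - x0))) m).
      { apply (interior_max _ x0 (x0 + 1)); [lra|]. intros c Hc.
        assert (Hg : g c <= g m) by (apply HM; lra). unfold g in Hg.
        rewrite (Rabs_pos_eq (c - x0)) in Hg by lra. rewrite (Rabs_pos_eq (m - x0)) in Hg by lra. lra. }
      apply sub_lin in Hl. assert (0 < F m L); [|lra]. apply HKp.
      rewrite Rabs_pos_eq by lra. lra. }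
  exists L. split; [unfold L; lra|]. intros x y Hxy.
  pose proof (Up x y Hxy) as U1. assert (Hyx : Rabs (x - y) <= 1) by (rewrite Rabs_minus_sym; auto).
  pose proof (Up y x Hyx) as U2. rewrite Rabs_minus_sym in U2. apply Rabs_le. lra.
Qed.

Definition RD (x d : R) := forall eps, 0 < eps -> exists del, 0 < del /\ forall h, 0 < h < del ->
  Rabs (u (x + h) - u x - d * h) <= eps * h.
Definition LD (x d : R) := forall eps, 0 < eps -> exists del, 0 < del /\ forall h, 0 < h < del ->
  Rabs (u (x - h) - u x + d * h) <= eps * h.

Lemma RD_ex : forall x, exists d, RD x d.
Proof.
  intros x. destruct lip as [L [HL HLip]].
  apply (right_deriv_generic u (fun z p => F z p) x L).
  - apply u_cont.
  - intros p eps He. destruct (Fjc x p eps He) as [d [Hd HD]]. exists d; split; auto.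
    intros z Hz. apply HD; auto. rewrite Rminus_eq_0, Rabs_R0; auto.
  - intros z p Hl. apply (sub_lin z p 0 0). eapply lmax_ext; [|exact Hl]. intros; simpl; ring.
  - intros z p Hl. apply (super_lin z p 0 0). eapply lmin_ext; [|exact Hl]. intros; simpl; ring.
  - intros a b c H1 H2 E1 E2 E3. apply (F_three x a b c); auto.
  - intros h Hh. specialize (HLip x (x + h)). replace (x + h - x) with h in HLip by ring.
    rewrite Rabs_pos_eq in HLip by lra. apply HLip. lra.
Qed.

Lemma LD_ex : forall x, exists e, LD x e.
Proof.
  intros x. destruct lip as [L [HL HLip]].
  destruct (right_deriv_generic (fun y => u (- y)) (fun z p => F (- z) (- p)) (- x) L) as [d Hd].
  - intros y. apply (continuous_comp Ropp u). apply exd_cont; auto_derive; auto. apply u_cont.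
  - intros p eps He. destruct (Fjc x (- p) eps He) as [d [Hd HD]]. exists d; split; auto.
    intros z Hz. replace (- - x) with x by ring. apply HD; auto.
    + replace (- z - x) with (- (z - - x)) by ring. rewrite Rabs_Ropp; auto.
    + rewrite Rminus_eq_0, Rabs_R0; auto.
  - intros z p [r [Hr Hl]]. apply (sub_lin (- z) (- p) 0 0). exists r. split; auto.
    intros y Hy. specialize (Hl (- y)). replace (- - y) with y in Hl by ring.
    replace (- - z) with z in Hl by ring.
    assert (Rabs (- y - z) < r) by (replace (- y - z) with (- (y - - z)) by ring; rewrite Rabs_Ropp; auto).
    specialize (Hl H0). lra.
  - intros z p [r [Hr Hl]]. apply (super_lin (- z) (- p) 0 0). exists r. split; auto.
    intros y Hy. specialize (Hl (- y)). replace (- - y) with y in Hl by ring.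
    replace (- - z) with z in Hl by ring.
    assert (Rabs (- y - z) < r) by (replace (- y - z) with (- (y - - z)) by ring; rewrite Rabs_Ropp; auto).
    specialize (Hl H0). lra.
  - intros a b c H1 H2 E1 E2 E3. replace (- - x) with x in *.
    + apply (F_three x (- c) (- b) (- a)); auto; lra.
    + ring.
  - intros h Hh. specialize (HLip x (x - h)). replace (x - h - x) with (- h) in HLip by ring.
    rewrite Rabs_Ropp, Rabs_pos_eq in HLip by lra. replace (- (- x + h)) with (x - h) by ring.
    replace (- - x) with x by ring. apply HLip; lra.
  - exists (- d). intros eps He. destruct (Hd eps He) as [del [Hdel HD]]. exists del; split; auto.
    intros h Hh. specialize (HD h Hh). replace (- (- x + h)) with (x - h) in HD by ring.
    replace (- - x) with x in HD by ring. replace (u (x - h) - u x + - d * h) with (u (x - h) - u x - d * h) by ring.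
    auto.
Qed.


Lemma quad_cont : forall c p k x1 y, continuous (fun y => u y - quadf c p k x1 y) y.
Proof.
  intros. apply (continuous_minus u (quadf c p k x1)); [apply u_cont|].
  apply exd_cont. eexists; apply quadf_derive.
Qed.

Lemma abs3 (a eta : R) : 0 <= eta -> a * a <= 8 * (eta * eta) -> Rabs a <= 3 * eta.
Proof. intros He Ha. apply Rabs_le. split; nra. Qed.

Lemma approx_sub : forall x1 r eta p, 0 < r -> 0 < eta ->
  (forall y, Rabs (y - x1) <= r -> u y <= u x1 + p * (y - x1) + eta * r) ->
  exists y s, Rabs (y - x1) <= r /\ Rabs (s - p) <= 3 * eta /\ F y s <= 0.
Proof.
  intros x1 r eta p Hr He Hy.
  set (k := 2 * eta / r).
  assert (Hkr : k * r = 2 * eta) by (unfold k; field; lra).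
  assert (Hk : 0 < k) by (unfold k; apply Rdiv_lt_0_compat; lra).
  destruct (quadf_C1 (u x1) p k x1) as [HC HD].
  set (g := fun y => u y - quadf (u x1) p k x1 y).
  destruct (evt_max g (x1 - r) (x1 + r)) as [m [Hm HM]]; [lra|intros; apply quad_cont|].
  assert (Hg0 : g x1 <= g m) by (apply HM; lra).
  assert (E0 : g x1 = 0) by (unfold g, quadf; ring).
  assert (Hbd : forall y, Rabs (y - x1) = r -> g y < 0).
  { intros y Hyr. unfold g, quadf. specialize (Hy y ltac:(lra)).
    assert ((y - x1) * (y - x1) = r * r).
    { rewrite <- Hyr. rewrite <- Rabs_mult. pose proof (Rle_0_sqr (y - x1)) as Q. unfold Rsqr in Q.
      rewrite Rabs_pos_eq; [ring|exact Q]. }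
    rewrite H0. nra. }
  assert (Hint : x1 - r < m < x1 + r).
  { split; apply Rnot_le_lt; intro Hle.
    - assert (m = x1 - r) by lra. assert (g m < 0); [apply Hbd; subst m; replace (x1 - r - x1) with (- r) by ring; rewrite Rabs_Ropp, Rabs_pos_eq; lra|lra].
    - assert (m = x1 + r) by lra. assert (g m < 0); [apply Hbd; subst m; replace (x1 + r - x1) with r by ring; rewrite Rabs_pos_eq; lra|lra]. }
  assert (Hl : local_max_at (fun y => u y - quadf (u x1) p k x1 y) m) by (apply (interior_max _ (x1 - r) (x1 + r)); auto).
  pose proof (u_sub _ m HC Hl) as Hs. rewrite HD in Hs.
  exists m, (p + 2 * k * (m - x1)). split; [apply Rabs_le; lra|]. split; auto.
  rewrite E0 in Hg0. unfold g, quadf in Hg0.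
  specialize (Hy m ltac:(apply Rabs_le; lra)).
  set (t := m - x1) in *.
  assert (Ht : k * (t * t) <= eta * r) by lra.
  assert (Ht2 : t * t * (2 * eta) <= eta * r * r) by (rewrite <- Hkr; nra).
  assert (Ht3 : t * t <= r * r / 2) by nra.
  replace (p + 2 * k * t - p) with (2 * k * t) by ring.
  apply abs3; [lra|].
  assert (k * k * (t * t) <= k * k * (r * r / 2)) by (apply Rmult_le_compat_l; nra).
  nra.
Qed.

Lemma approx_super : forall x1 r eta p, 0 < r -> 0 < eta ->
  (forall y, Rabs (y - x1) <= r -> u x1 + p * (y - x1) - eta * r <= u y) ->
  exists y s, Rabs (y - x1) <= r /\ Rabs (s - p) <= 3 * eta /\ 0 <= F y s.
Proof.
  intros x1 r eta p Hr He Hy.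
  set (k := 2 * eta / r).
  assert (Hkr : k * r = 2 * eta) by (unfold k; field; lra).
  assert (Hk : 0 < k) by (unfold k; apply Rdiv_lt_0_compat; lra).
  destruct (quadf_C1 (u x1) p (- k) x1) as [HC HD].
  set (g := fun y => u y - quadf (u x1) p (- k) x1 y).
  destruct (evt_min g (x1 - r) (x1 + r)) as [m [Hm HM]]; [lra|intros; apply quad_cont|].
  assert (Hg0 : g m <= g x1) by (apply HM; lra).
  assert (E0 : g x1 = 0) by (unfold g, quadf; ring).
  assert (Hbd : forall y, Rabs (y - x1) = r -> 0 < g y).
  { intros y Hyr. unfold g, quadf. specialize (Hy y ltac:(lra)).
    assert ((y - x1) * (y - x1) = r * r).
    { rewrite <- Hyr. rewrite <- Rabs_mult. pose proof (Rle_0_sqr (y - x1)) as Q. unfold Rsqr in Q.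
      rewrite Rabs_pos_eq; [ring|exact Q]. }
    rewrite H0. nra. }
  assert (Hint : x1 - r < m < x1 + r).
  { split; apply Rnot_le_lt; intro Hle.
    - assert (m = x1 - r) by lra. assert (0 < g m); [apply Hbd; subst m; replace (x1 - r - x1) with (- r) by ring; rewrite Rabs_Ropp, Rabs_pos_eq; lra|lra].
    - assert (m = x1 + r) by lra. assert (0 < g m); [apply Hbd; subst m; replace (x1 + r - x1) with r by ring; rewrite Rabs_pos_eq; lra|lra]. }
  assert (Hl : local_min_at (fun y => u y - quadf (u x1) p (- k) x1 y) m) by (apply (interior_min _ (x1 - r) (x1 + r)); auto).
  pose proof (u_super _ m HC Hl) as Hs. rewrite HD in Hs.
  exists m, (p + 2 * - k * (m - x1)). split; [apply Rabs_le; lra|]. split; auto.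
  rewrite E0 in Hg0. unfold g, quadf in Hg0.
  specialize (Hy m ltac:(apply Rabs_le; lra)).
  set (t := m - x1) in *.
  assert (Ht : k * (t * t) <= eta * r) by lra.
  assert (Ht2 : t * t * (2 * eta) <= eta * r * r) by (rewrite <- Hkr; nra).
  assert (Ht3 : t * t <= r * r / 2) by nra.
  replace (p + 2 * - k * t - p) with (2 * - k * t) by ring.
  apply abs3; [lra|].
  assert (k * k * (t * t) <= k * k * (r * r / 2)) by (apply Rmult_le_compat_l; nra).
  nra.
Qed.

Lemma root_core : forall x0 d,
  (forall eps del, 0 < eps -> 0 < del -> exists x1 r, 0 < r /\ Rabs (x1 - x0) + r < del /\
     forall y, Rabs (y - x1) <= r -> Rabs (u y - u x1 - d * (y - x1)) <= eps * r) ->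
  F x0 d = 0.
Proof.
  intros x0 d Hc.
  destruct (Rtotal_order (F x0 d) 0) as [Hlt|[Heq|Hgt]]; auto; exfalso.
  - destruct (Fjc_neg x0 d Hlt) as [d1 [Hd1 HD1]].
    destruct (Hc (d1 / 6) d1) as [x1 [r [Hr [Hx1 Hy]]]]; [lra|lra|].
    destruct (approx_super x1 r (d1 / 6) d Hr ltac:(lra)) as [y [s [Hy1 [Hs HF]]]].
    { intros y Hyy. specialize (Hy y Hyy). apply Rabs_le_between in Hy. lra. }
    assert (F y s < 0); [|lra]. apply HD1; [|lra].
    pose proof (Rabs_triang (y - x1) (x1 - x0)). replace (y - x1 + (x1 - x0)) with (y - x0) in H0 by ring. lra.
  - destruct (Fjc_pos x0 d Hgt) as [d1 [Hd1 HD1]].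
    destruct (Hc (d1 / 6) d1) as [x1 [r [Hr [Hx1 Hy]]]]; [lra|lra|].
    destruct (approx_sub x1 r (d1 / 6) d Hr ltac:(lra)) as [y [s [Hy1 [Hs HF]]]].
    { intros y Hyy. specialize (Hy y Hyy). apply Rabs_le_between in Hy. lra. }
    assert (0 < F y s); [|lra]. apply HD1; [|lra].
    pose proof (Rabs_triang (y - x1) (x1 - x0)). replace (y - x1 + (x1 - x0)) with (y - x0) in H0 by ring. lra.
Qed.

Lemma RD_root : forall x d, RD x d -> F x d = 0.
Proof.
  intros x d Hd. apply root_core. intros eps del He Hdel.
  destruct (Hd (eps / 4)) as [d0 [Hd0 HD]]; [lra|].
  set (h := Rmin d0 del / 4).
  assert (0 < Rmin d0 del) by (apply Rmin_pos; lra).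
  pose proof (Rmin_l d0 del). pose proof (Rmin_r d0 del).
  assert (Hh : 0 < h) by (unfold h; lra).
  exists (x + h), h. split; auto. split.
  { replace (x + h - x) with h by ring. rewrite Rabs_pos_eq by lra. unfold h; lra. }
  assert (Ha : forall y, x <= y <= x + 2 * h -> Rabs (u y - u x - d * (y - x)) <= eps / 4 * (y - x)).
  { intros y Hy. destruct (Req_dec y x) as [->|Hne].
    - replace (u x - u x - d * (x - x)) with 0 by ring. rewrite Rabs_R0. lra.
    - specialize (HD (y - x)). replace (x + (y - x)) with y in HD by ring. apply HD. unfold h in Hy. lra. }
  intros y Hy. apply Rabs_le_between' in Hy.
  pose proof (Ha y ltac:(lra)) as A1. pose proof (Ha (x + h) ltac:(lra)) as A2.
  apply Rabs_le_between in A1. apply Rabs_le_between in A2. apply Rabs_le_between.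
  nra.
Qed.

Lemma LD_root : forall x d, LD x d -> F x d = 0.
Proof.
  intros x d Hd. apply root_core. intros eps del He Hdel.
  destruct (Hd (eps / 4)) as [d0 [Hd0 HD]]; [lra|].
  set (h := Rmin d0 del / 4).
  assert (0 < Rmin d0 del) by (apply Rmin_pos; lra).
  pose proof (Rmin_l d0 del). pose proof (Rmin_r d0 del).
  assert (Hh : 0 < h) by (unfold h; lra).
  exists (x - h), h. split; auto. split.
  { replace (x - h - x) with (- h) by ring. rewrite Rabs_Ropp, Rabs_pos_eq by lra. unfold h; lra. }
  assert (Ha : forall y, x - 2 * h <= y <= x -> Rabs (u y - u x - d * (y - x)) <= eps / 4 * (x - y)).
  { intros y Hy. destruct (Req_dec y x) as [->|Hne].
    - replace (u x - u x - d * (x - x)) with 0 by ring. rewrite Rabs_R0. lra.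
    - specialize (HD (x - y)). replace (x - (x - y)) with y in HD by ring.
      replace (u y - u x - d * (y - x)) with (u y - u x + d * (x - y)) by ring.
      apply HD. unfold h in Hy. lra. }
  intros y Hy. apply Rabs_le_between' in Hy.
  pose proof (Ha y ltac:(lra)) as A1. pose proof (Ha (x - h) ltac:(lra)) as A2.
  apply Rabs_le_between in A1. apply Rabs_le_between in A2. apply Rabs_le_between.
  nra.
Qed.

Lemma no_convex_kink : forall x d e, RD x d -> LD x e -> d <= e.
Proof.
  intros x d e Hd He. apply Rnot_lt_le. intro Hlt.
  set (c := (d + e) / 2).
  pose proof (RD_root x d Hd) as R1. pose proof (LD_root x e He) as R2.
  assert (Fc : F x c < 0).
  { pose proof (F_between x e c d ltac:(unfold c; lra) ltac:(unfold c; lra)). rewrite R1, R2 in H0.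
    assert (0 < d - e) by lra. nra. }
  destruct (Hd (d - c)) as [d1 [Hd1 HD1]]; [unfold c; lra|].
  destruct (He (c - e)) as [d2 [Hd2 HD2]]; [unfold c; lra|].
  assert (Hl : local_min_at (fun y => u y - (0 + c * (y - x))) x).
  { exists (Rmin d1 d2). split; [apply Rmin_pos; auto|].
    pose proof (Rmin_l d1 d2). pose proof (Rmin_r d1 d2).
    intros y Hy. apply Rabs_def2 in Hy.
    destruct (Rtotal_order y x) as [Hyx|[->|Hyx]].
    - specialize (HD2 (x - y) ltac:(lra)). replace (x - (x - y)) with y in HD2 by ring.
      apply Rabs_le_between in HD2. nra.
    - lra.
    - specialize (HD1 (y - x) ltac:(lra)). replace (x + (y - x)) with y in HD1 by ring.
      apply Rabs_le_between in HD1. nra. }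
  apply super_lin in Hl. lra.
Qed.

Lemma RD_unique : forall x d1 d2, RD x d1 -> RD x d2 -> d1 = d2.
Proof.
  intros x d1 d2 H1 H2. apply Rle_antisym; apply Rnot_lt_le; intro Hlt.
  - destruct (H1 ((d1 - d2) / 4)) as [a [Ha HA]]; [lra|].
    destruct (H2 ((d1 - d2) / 4)) as [b [Hb HB]]; [lra|].
    set (h := Rmin a b / 2). assert (0 < Rmin a b) by (apply Rmin_pos; auto).
    pose proof (Rmin_l a b). pose proof (Rmin_r a b).
    specialize (HA h ltac:(unfold h; lra)). specialize (HB h ltac:(unfold h; lra)).
    apply Rabs_le_between in HA. apply Rabs_le_between in HB.
    assert (0 < h) by (unfold h; lra). nra.
  - destruct (H1 ((d2 - d1) / 4)) as [a [Ha HA]]; [lra|].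
    destruct (H2 ((d2 - d1) / 4)) as [b [Hb HB]]; [lra|].
    set (h := Rmin a b / 2). assert (0 < Rmin a b) by (apply Rmin_pos; auto).
    pose proof (Rmin_l a b). pose proof (Rmin_r a b).
    specialize (HA h ltac:(unfold h; lra)). specialize (HB h ltac:(unfold h; lra)).
    apply Rabs_le_between in HA. apply Rabs_le_between in HB.
    assert (0 < h) by (unfold h; lra). nra.
Qed.


Definition T1 (x : R) := forall d, RD x d -> Hp H x d (u x) < 0.
Definition T2 (x : R) := forall d, RD x d -> 0 < Hp H x d (u x).

Lemma RD_LD_deriv : forall x d, RD x d -> LD x d -> is_derive u x d.
Proof.
  intros x d H1 H2. apply is_derive_Reals. intros eps He.
  destruct (H1 (eps / 2)) as [d1 [Hd1 HD1]]; [lra|].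
  destruct (H2 (eps / 2)) as [d2 [Hd2 HD2]]; [lra|].
  assert (Hm : 0 < Rmin d1 d2) by (apply Rmin_pos; auto).
  exists (mkposreal _ Hm). intros h Hh0 Hh. simpl in Hh.
  pose proof (Rmin_l d1 d2). pose proof (Rmin_r d1 d2).
  replace ((u (x + h) - u x) / h - d) with ((u (x + h) - u x - d * h) / h) by (field; auto).
  rewrite Rabs_div by auto.
  apply (Rmult_lt_reg_r (Rabs h)); [apply Rabs_pos_lt; auto|].
  unfold Rdiv. rewrite Rmult_assoc, Rinv_l, Rmult_1_r by (apply Rabs_no_R0; auto).
  destruct (Rtotal_order h 0) as [Hn|[Hz|Hp']]; [|contradiction|].
  - rewrite (Rabs_left h) in Hh |- * by lra.
    specialize (HD2 (- h) ltac:(lra)). replace (x - - h) with (x + h) in HD2 by ring.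
    replace (u (x + h) - u x + d * - h) with (u (x + h) - u x - d * h) in HD2 by ring.
    assert (0 < eps * - h) by (apply Rmult_lt_0_compat; lra). lra.
  - rewrite (Rabs_pos_eq h) in Hh |- * by lra. specialize (HD1 h ltac:(lra)).
    assert (0 < eps * h) by (apply Rmult_lt_0_compat; lra). lra.
Qed.

Lemma T12 : forall x, T1 x \/ T2 x.
Proof.
  intros x. destruct (RD_ex x) as [d Hd]. destruct (LD_ex x) as [e He].
  pose proof (no_convex_kink x d e Hd He) as Hde.
  assert (Huniq : forall d', RD x d' -> d' = d) by (intros; eapply RD_unique; eauto).
  destruct (Req_dec d e) as [<-|Hne].
  - pose proof (RD_LD_deriv x d Hd He) as Hder.
    assert (Hex : ex_derive u x) by (eexists; eauto).
    pose proof (Hnd x Hex) as Hn. rewrite (is_derive_unique _ _ _ Hder) in Hn.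
    destruct (Rtotal_order (Hp H x d (u x)) 0) as [Hl|[Hz|Hg]]; [left|contradiction|right];
      intros d' Hd'; rewrite (Huniq d' Hd'); auto.
  - left. intros d' Hd'. rewrite (Huniq d' Hd').
    pose proof (RD_root x d Hd). pose proof (LD_root x e He).
    pose proof (F_tangent x d e Hne). nra.
Qed.

Lemma T12_disj : forall x, T1 x -> T2 x -> False.
Proof.
  intros x H1 H2. destruct (RD_ex x) as [d Hd]. specialize (H1 d Hd). specialize (H2 d Hd). lra.
Qed.

Lemma kink_sign : forall x d e, RD x d -> LD x e -> d < e -> 0 < Hp H x e (u x).
Proof.
  intros x d e Hd He Hlt. pose proof (RD_root x d Hd). pose proof (LD_root x e He).
  pose proof (F_tangent x e d ltac:(lra)). nra.
Qed.

Lemma Rstep : forall x, T1 x -> exists h, 0 < h /\ forall w, x < w < x + h -> T1 w.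
Proof.
  intros x HT. destruct (RD_ex x) as [d Hd]. pose proof (HT d Hd) as Hneg.
  pose proof (RD_root x d Hd) as Hr.
  destruct (F_sign_neg x d Hr Hneg 1 Rlt_0_1) as [t [Ht [Fc _]]].
  set (c := d + t) in *.
  destruct (Fjc_neg x c Fc) as [d1 [Hd1 HD1]].
  destruct (Hd (t / 2)) as [d2 [Hd2 HD2]]; [lra|].
  set (g := fun y => u y - (0 + c * (y - x))).
  assert (Hgc : forall y, continuous g y).
  { intros y. unfold g. apply (continuous_minus u (fun y => 0 + c * (y - x))); [apply u_cont|].
    apply exd_cont. auto_derive. auto. }
  assert (Hm0 : 0 < Rmin d1 d2) by (apply Rmin_pos; auto).
  pose proof (Rmin_l d1 d2). pose proof (Rmin_r d1 d2).
  set (h := Rmin d1 d2) in *.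
  assert (Hdec : forall s, 0 < s < d2 -> g (x + s) < g x).
  { intros s Hs. specialize (HD2 s Hs). apply Rabs_le_between in HD2. unfold g.
    replace (x + s - x) with s by ring. replace (x - x) with 0 by ring. unfold c in *. nra. }
  assert (Mono : forall z1 z2, x < z1 -> z1 < z2 -> z2 < x + h -> g z2 <= g z1).
  { intros z1 z2 Hz1 Hz12 Hz2. apply Rnot_lt_le. intro Hlt.
    destruct (evt_min g x z2) as [m [Hm HM]]; [lra|intros; apply Hgc|].
    destruct (Req_dec m z2) as [->|Hmz2].
    { specialize (HM z1 ltac:(lra)). lra. }
    destruct (Req_dec m x) as [->|Hmx].
    { specialize (HM (x + (z1 - x) / 2) ltac:(lra)). specialize (Hdec ((z1 - x) / 2) ltac:(lra)). lra. }
    assert (Hl : local_min_at g m) by (apply (interior_min g x z2); auto; lra).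
    apply super_lin in Hl.
    assert (F m c < 0); [|lra]. apply HD1; [apply Rabs_def1; lra|]. rewrite Rminus_eq_0, Rabs_R0; lra. }
  exists h. split; auto. intros w Hw d' Hd'.
  assert (Hle : d' <= c).
  { apply Rnot_lt_le. intro Hlt. destruct (Hd' ((d' - c) / 2)) as [d3 [Hd3 HD3]]; [lra|].
    set (s := Rmin d3 (x + h - w) / 2).
    assert (0 < Rmin d3 (x + h - w)) by (apply Rmin_pos; lra).
    pose proof (Rmin_l d3 (x + h - w)). pose proof (Rmin_r d3 (x + h - w)).
    specialize (HD3 s ltac:(unfold s; lra)). apply Rabs_le_between in HD3.
    pose proof (Mono w (w + s) ltac:(lra) ltac:(unfold s; lra) ltac:(unfold s; lra)) as Hg.
    unfold g in Hg. assert (0 < s) by (unfold s; lra). nra. }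
  pose proof (RD_root w d' Hd') as Hr'.
  assert (Fwc : F w c < 0) by (apply HD1; [apply Rabs_def1; lra|rewrite Rminus_eq_0, Rabs_R0; lra]).
  assert (Hne : d' <> c) by (intro E; rewrite E in Hr'; lra).
  pose proof (F_tangent w d' c Hne). nra.
Qed.

Lemma Lstep : forall x e, LD x e -> 0 < Hp H x e (u x) -> exists h, 0 < h /\ forall w, x - h < w < x -> T2 w.
Proof.
  intros x e He Hpos.
  pose proof (LD_root x e He) as Hr.
  destruct (F_sign_pos x e Hr Hpos 1 Rlt_0_1) as [t [Ht [_ Fc]]].
  set (c := e - t) in *.
  destruct (Fjc_neg x c Fc) as [d1 [Hd1 HD1]].
  destruct (He (t / 2)) as [d2 [Hd2 HD2]]; [lra|].
  set (g := fun y => u y - (0 + c * (y - x))).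
  assert (Hgc : forall y, continuous g y).
  { intros y. unfold g. apply (continuous_minus u (fun y => 0 + c * (y - x))); [apply u_cont|].
    apply exd_cont. auto_derive. auto. }
  assert (Hm0 : 0 < Rmin d1 d2) by (apply Rmin_pos; auto).
  pose proof (Rmin_l d1 d2). pose proof (Rmin_r d1 d2).
  set (h := Rmin d1 d2) in *.
  assert (Hdec : forall s, 0 < s < d2 -> g (x - s) < g x).
  { intros s Hs. specialize (HD2 s Hs). apply Rabs_le_between in HD2. unfold g.
    replace (x - s - x) with (- s) by ring. replace (x - x) with 0 by ring. unfold c in *. nra. }
  assert (Mono : forall z1 z2, x - h < z1 -> z1 < z2 -> z2 < x -> g z1 <= g z2).
  { intros z1 z2 Hz1 Hz12 Hz2. apply Rnot_lt_le. intro Hlt.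
    destruct (evt_min g z1 x) as [m [Hm HM]]; [lra|intros; apply Hgc|].
    destruct (Req_dec m z1) as [->|Hmz1].
    { specialize (HM z2 ltac:(lra)). lra. }
    destruct (Req_dec m x) as [->|Hmx].
    { specialize (HM (x - (x - z2) / 2) ltac:(lra)). specialize (Hdec ((x - z2) / 2) ltac:(lra)). lra. }
    assert (Hl : local_min_at g m) by (apply (interior_min g z1 x); auto; lra).
    apply super_lin in Hl.
    assert (F m c < 0); [|lra]. apply HD1; [apply Rabs_def1; lra|]. rewrite Rminus_eq_0, Rabs_R0; lra. }
  exists h. split; auto. intros w Hw d' Hd'.
  assert (Hle : c <= d').
  { apply Rnot_lt_le. intro Hlt. destruct (Hd' ((c - d') / 2)) as [d3 [Hd3 HD3]]; [lra|].
    set (s := Rmin d3 (x - w) / 2).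
    assert (0 < Rmin d3 (x - w)) by (apply Rmin_pos; lra).
    pose proof (Rmin_l d3 (x - w)). pose proof (Rmin_r d3 (x - w)).
    specialize (HD3 s ltac:(unfold s; lra)). apply Rabs_le_between in HD3.
    pose proof (Mono w (w + s) ltac:(lra) ltac:(unfold s; lra) ltac:(unfold s; lra)) as Hg.
    unfold g in Hg. assert (0 < s) by (unfold s; lra). nra. }
  pose proof (RD_root w d' Hd') as Hr'.
  assert (Fwc : F w c < 0) by (apply HD1; [apply Rabs_def1; lra|rewrite Rminus_eq_0, Rabs_R0; lra]).
  assert (Hne : d' <> c) by (intro E; rewrite E in Hr'; lra).
  pose proof (F_tangent w d' c Hne). nra.
Qed.

Lemma RD_per : forall x d, RD x d <-> RD (x + 1) d.
Proof.
  intros x d. unfold RD. split; intros Hd eps He; destruct (Hd eps He) as [del [Hdel HD]];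
    exists del; split; auto; intros h Hh; specialize (HD h Hh).
  - replace (x + 1 + h) with ((x + h) + 1) by ring. rewrite !u_per. auto.
  - replace (x + 1 + h) with ((x + h) + 1) in HD by ring. rewrite !u_per in HD. auto.
Qed.

Lemma Hp_per : forall x p v, Hp H (x + 1) p v = Hp H x p v.
Proof. intros. unfold Hp, partial. apply Derive_ext. intros; apply Hper. Qed.

Lemma T2_per : forall x, T2 (x + 1) <-> T2 x.
Proof.
  intros x. unfold T2. split; intros HT d Hd.
  - rewrite <- u_per, <- Hp_per. apply HT. apply (proj1 (RD_per x d)); auto.
  - rewrite u_per, Hp_per. apply HT. apply (proj2 (RD_per x d)); auto.
Qed.

Lemma T2_Z : forall n x, T2 x -> T2 (x + IZR n).
Proof.
  intros n. induction n using Z.peano_ind; intros x Hx.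
  - rewrite Rplus_0_r; auto.
  - rewrite succ_IZR. replace (x + (IZR n + 1)) with ((x + IZR n) + 1) by ring.
    apply T2_per. auto.
  - assert (E : IZR n = IZR (Z.pred n) + 1) by (rewrite <- succ_IZR, Z.succ_pred; auto).
    apply T2_per. replace (x + IZR (Z.pred n) + 1) with (x + IZR n) by lra. auto.
Qed.

Lemma no_mix : forall b a, T1 b -> T2 a -> False.
Proof.
  intros b a0 Hb Ha0.
  destruct (archimed (b - a0)) as [A1 A2].
  set (a := a0 + IZR (up (b - a0))).
  assert (Ha : T2 a) by (apply T2_Z; auto).
  assert (Hba : b < a) by (unfold a; lra).
  set (E := fun s => b <= s <= a /\ forall v, b <= v <= s -> T1 v).
  assert (Eb : E b) by (split; [lra|intros v Hv; replace v with b by lra; auto]).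
  assert (Ebd : bound E) by (exists a; intros s [Hs _]; lra).
  destruct (completeness E Ebd (ex_intro _ _ Eb)) as [s [Hub Hlub]].
  assert (Hbs : b <= s) by (apply Hub; auto).
  assert (Hsa : s <= a) by (apply Hlub; intros y [Hy _]; lra).
  assert (below : forall v, b <= v < s -> T1 v).
  { intros v Hv. apply NNPP. intro Hn.
    assert (s <= v); [|lra]. apply Hlub. intros y [Hy1 Hy2]. apply Rnot_lt_le. intro Hlt.
    apply Hn. apply Hy2. lra. }
  destruct (T12 s) as [Hs|Hs].
  - destruct (Rstep s Hs) as [h [Hh HR]].
    assert (Hsa' : s < a) by (destruct (Req_dec s a) as [->|]; [exfalso; eapply T12_disj; eauto|lra]).
    set (e := Rmin (s + h / 2) a).
    pose proof (Rmin_l (s + h / 2) a). pose proof (Rmin_r (s + h / 2) a).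
    assert (He : E e).
    { split; [unfold e; split; [apply Rmin_glb; lra|lra]|].
      intros v Hv. destruct (Rtotal_order v s) as [Hl|[->|Hg]].
      - apply below; lra.
      - auto.
      - apply HR. unfold e in Hv. lra. }
    specialize (Hub e He). assert (s < e) by (unfold e; apply Rmin_glb_lt; lra). lra.
  - assert (Hbs' : b < s) by (destruct (Req_dec b s) as [<-|]; [exfalso; eapply T12_disj; eauto|lra]).
    destruct (RD_ex s) as [d Hd]. destruct (LD_ex s) as [e He].
    pose proof (no_convex_kink s d e Hd He) as Hde.
    assert (Hpe : 0 < Hp H s e (u s)).
    { destruct (Req_dec d e) as [<-|Hne]; [apply Hs; auto|].
      apply (kink_sign s d e); auto; lra. }
    destruct (Lstep s e He Hpe) as [h [Hh HL]].
    set (w := Rmax b (s - h / 2)).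
    pose proof (Rmax_l b (s - h / 2)). pose proof (Rmax_r b (s - h / 2)).
    assert (w < s) by (unfold w; apply Rmax_lub_lt; lra).
    apply (T12_disj w).
    + apply below. split; [unfold w; lra|auto].
    + apply HL. split; [unfold w in *; lra|auto].
Qed.

Lemma RD_Derive : forall x, RD x (Derive u x) /\ is_derive u x (Derive u x).
Proof.
  intros x. destruct (RD_ex x) as [d Hd]. destruct (LD_ex x) as [e He].
  pose proof (no_convex_kink x d e Hd He) as Hde.
  destruct (Req_dec d e) as [<-|Hne].
  - pose proof (RD_LD_deriv x d Hd He) as Hder. rewrite (is_derive_unique _ _ _ Hder). auto.
  - exfalso. assert (T1 x).
    { intros d' Hd'. rewrite (RD_unique x d' d Hd' Hd).
      pose proof (RD_root x d Hd). pose proof (LD_root x e He).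
      pose proof (F_tangent x d e Hne). nra. }
    destruct (Lstep x e He (kink_sign x d e Hd He ltac:(lra))) as [h [Hh HL]].
    apply (no_mix x (x - h / 2)); auto. apply HL. lra.
Qed.

Theorem u_C1 : (forall x, is_derive u x (Derive u x)) /\ (forall x, continuous (Derive u) x).
Proof.
  split; [intros x; apply RD_Derive|].
  assert (Hall : (forall x, T1 x) \/ (forall x, T2 x)).
  { destruct (classic (exists a, T2 a)) as [[a Ha]|Hn].
    - right. intros x. destruct (T12 x) as [Hx|Hx]; auto. exfalso; eapply no_mix; eauto.
    - left. intros x. destruct (T12 x) as [Hx|Hx]; auto. exfalso; apply Hn; eauto. }
  assert (Hroot : forall x, F x (Derive u x) = 0) by (intros x; apply RD_root, RD_Derive).
  intros x. apply eps_cont. intros eps He.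
  destruct Hall as [Hall|Hall].
  - assert (Hs : forall w, Hp H w (Derive u w) (u w) < 0) by (intros w; apply Hall, RD_Derive).
    destruct (F_sign_neg x _ (Hroot x) (Hs x) eps He) as [t [Ht [Fc Fc']]].
    destruct (Fjc_neg x _ Fc) as [d1 [Hd1 HD1]].
    destruct (Fjc_pos x _ Fc') as [d2 [Hd2 HD2]].
    exists (Rmin d1 d2). split; [apply Rmin_pos; auto|].
    pose proof (Rmin_l d1 d2). pose proof (Rmin_r d1 d2).
    intros w Hw. set (c := Derive u x + t) in *. set (c' := Derive u x - t) in *.
    assert (F1 : F w c < 0) by (apply HD1; [lra|rewrite Rminus_eq_0, Rabs_R0; lra]).
    assert (F2 : 0 < F w c') by (apply HD2; [lra|rewrite Rminus_eq_0, Rabs_R0; lra]).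
    pose proof (Hroot w) as Rw. pose proof (Hs w) as Sw.
    set (D := Derive u w) in *.
    assert (D < c).
    { apply Rnot_le_lt. intro Hle. destruct (Req_dec D c) as [E|Hne]; [rewrite E in Rw; lra|].
      pose proof (F_tangent w D c Hne). nra. }
    assert (c' < D).
    { apply Rnot_le_lt. intro Hle. destruct (Req_dec D c') as [E|Hne]; [rewrite E in Rw; lra|].
      pose proof (F_between w D c' c ltac:(lra) ltac:(unfold c, c'; lra)). nra. }
    apply Rabs_def1; unfold c, c' in *; lra.
  - assert (Hs : forall w, 0 < Hp H w (Derive u w) (u w)) by (intros w; apply Hall, RD_Derive).
    destruct (F_sign_pos x _ (Hroot x) (Hs x) eps He) as [t [Ht [Fc' Fc]]].
    destruct (Fjc_neg x _ Fc) as [d1 [Hd1 HD1]].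
    destruct (Fjc_pos x _ Fc') as [d2 [Hd2 HD2]].
    exists (Rmin d1 d2). split; [apply Rmin_pos; auto|].
    pose proof (Rmin_l d1 d2). pose proof (Rmin_r d1 d2).
    intros w Hw. set (c := Derive u x - t) in *. set (c' := Derive u x + t) in *.
    assert (F1 : F w c < 0) by (apply HD1; [lra|rewrite Rminus_eq_0, Rabs_R0; lra]).
    assert (F2 : 0 < F w c') by (apply HD2; [lra|rewrite Rminus_eq_0, Rabs_R0; lra]).
    pose proof (Hroot w) as Rw. pose proof (Hs w) as Sw.
    set (D := Derive u w) in *.
    assert (c < D).
    { apply Rnot_le_lt. intro Hle. destruct (Req_dec D c) as [E|Hne]; [rewrite E in Rw; lra|].
      pose proof (F_tangent w D c Hne). nra. }
    assert (D < c').
    { apply Rnot_le_lt. intro Hle. destruct (Req_dec D c') as [E|Hne]; [rewrite E in Rw; lra|].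
      pose proof (F_between w c c' D ltac:(unfold c, c'; lra) ltac:(lra)). nra. }
    apply Rabs_def1; unfold c, c' in *; lra.
Qed.


Theorem u_eq : forall x, H x (Derive u x) (u x) = 0.
Proof. intros x. apply RD_root, RD_Derive. Qed.

End Reg.

Lemma lip_of_deriv (g dg : R -> R) (p K : R) :
  (forall q, is_derive g q (dg q)) -> (forall q, Rabs (q - p) <= 1 -> Rabs (dg q) <= K) ->
  forall q1 q2, Rabs (q1 - p) <= 1 -> Rabs (q2 - p) <= 1 -> Rabs (g q1 - g q2) <= K * Rabs (q1 - q2).
Proof.
  intros Hd Hb q1 q2 H1 H2.
  destruct (Rtotal_order q1 q2) as [Hl|[->|Hg]].
  - destruct (mvt_of g dg q1 q2 Hd Hl) as [c [Hc E]].
    rewrite <- Rabs_Ropp. replace (- (g q1 - g q2)) with (g q2 - g q1) by ring. rewrite E.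
    rewrite Rabs_mult. rewrite (Rabs_minus_sym q1 q2).
    apply Rmult_le_compat_r; [apply Rabs_pos|]. apply Hb.
    apply Rabs_le_between' in H1. apply Rabs_le_between' in H2. apply Rabs_le_between'. lra.
  - rewrite !Rminus_eq_0, Rabs_R0. lra.
  - destruct (mvt_of g dg q2 q1 Hd Hg) as [c [Hc E]].
    rewrite E. rewrite Rabs_mult.
    apply Rmult_le_compat_r; [apply Rabs_pos|]. apply Hb.
    apply Rabs_le_between' in H1. apply Rabs_le_between' in H2. apply Rabs_le_between'. lra.
Qed.

Lemma taylor1 (f df : R -> R) (p K a : R) : 0 <= K ->
  (forall q, is_derive f q (df q)) ->
  (forall q1 q2, Rabs (q1 - p) <= 1 -> Rabs (q2 - p) <= 1 -> Rabs (df q1 - df q2) <= K * Rabs (q1 - q2)) ->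
  Rabs a <= 1 -> Rabs (f (p + a) - f p - df p * a) <= K * (a * a).
Proof.
  intros HK0 Hd HL Ha.
  assert (Main : forall c, Rabs (c - p) <= Rabs a -> f (p + a) - f p = df c * a ->
     Rabs (f (p + a) - f p - df p * a) <= K * (a * a)).
  { intros c Hc E. rewrite E. replace (df c * a - df p * a) with ((df c - df p) * a) by ring.
    rewrite Rabs_mult. specialize (HL c p ltac:(lra) ltac:(rewrite Rminus_eq_0, Rabs_R0; lra)).
    replace (a * a) with (Rabs a * Rabs a) by (rewrite <- Rabs_mult; rewrite Rabs_pos_eq; [ring|nra]).
    assert (K * Rabs (c - p) <= K * Rabs a) by (apply Rmult_le_compat_l; auto).
    assert (Rabs (df c - df p) <= K * Rabs a) by lra.
    replace (K * (Rabs a * Rabs a)) with ((K * Rabs a) * Rabs a) by ring.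
    apply Rmult_le_compat_r; auto. apply Rabs_pos. }
  destruct (Rtotal_order a 0) as [Hn|[->|Hp]].
  - destruct (mvt_of f df (p + a) p Hd ltac:(lra)) as [c [Hc E]].
    apply (Main c).
    + rewrite (Rabs_left a) in Ha |- * by lra. apply Rabs_le_between'. lra.
    + lra.
  - rewrite Rplus_0_r. replace (f p - f p - df p * 0) with 0 by ring. rewrite Rabs_R0. nra.
  - destruct (mvt_of f df p (p + a) Hd ltac:(lra)) as [c [Hc E]].
    apply (Main c).
    + rewrite (Rabs_pos_eq a) in Ha |- * by lra. apply Rabs_le_between'. lra.
    + rewrite E. ring.
Qed.

Section TaylorH.
Variable H : R -> R -> R -> R.
Hypothesis Hsm : smooth3 H.
Hypothesis Hper : forall x p v, H (x + 1) p v = H x p v.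

Lemma pderiv_per : forall l, List.Forall (fun i => i <> 0%nat) l ->
  forall x p v, pderiv l H (x + 1) p v = pderiv l H x p v.
Proof.
  induction l as [|i l IH]; intros Hl x p v; simpl; [apply Hper|].
  inversion Hl; subst. destruct i as [|[|i]]; [contradiction| |]; simpl;
  apply Derive_ext; intros; apply IH; auto.
Qed.

Lemma pderiv_bound : forall l, List.Forall (fun i => i <> 0%nat) l -> forall P V,
  exists K, 0 <= K /\ forall x p v, Rabs p <= P -> Rabs v <= V -> Rabs (pderiv l H x p v) <= K.
Proof.
  intros l Hl P V. destruct (box_bound (pderiv l H) (proj1 (Hsm l)) 0 1 (- P) P (- V) V) as [K0 HK0].
  exists (Rmax K0 0). split; [apply Rmax_r|]. intros x p v Hpb Hvb.
  destruct (per_reduce (fun x => pderiv l H x p v) (fun x => pderiv_per l Hl x p v) x) as [y [Hy E]].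
  simpl in E. rewrite E. eapply Rle_trans; [|apply Rmax_l]. apply HK0; auto.
  - apply Rabs_le_between in Hpb; auto.
  - apply Rabs_le_between in Hvb; auto.
Qed.

Lemma Hder_p : forall x q v, is_derive (fun q => H x q v) q (Hp H x q v).
Proof. intros. pose proof (proj2 (Hsm nil) 1%nat x q v) as E. simpl in E. apply Derive_correct in E. exact E. Qed.
Lemma Hder_u : forall x q v, is_derive (fun v => H x q v) v (Hu H x q v).
Proof. intros. pose proof (proj2 (Hsm nil) 2%nat x q v) as E. simpl in E. apply Derive_correct in E. exact E. Qed.
Lemma Hpder_p : forall x q v, is_derive (fun q => Hp H x q v) q (pderiv (1 :: 1 :: nil)%nat H x q v).
Proof. intros. pose proof (proj2 (Hsm (1 :: nil)%nat) 1%nat x q v) as E. simpl in E. apply Derive_correct in E. exact E. Qed.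
Lemma Huder_u : forall x q v, is_derive (fun v => Hu H x q v) v (pderiv (2 :: 2 :: nil)%nat H x q v).
Proof. intros. pose proof (proj2 (Hsm (2 :: nil)%nat) 2%nat x q v) as E. simpl in E. apply Derive_correct in E. exact E. Qed.
Lemma Huder_p : forall x q v, is_derive (fun q => Hu H x q v) q (pderiv (1 :: 2 :: nil)%nat H x q v).
Proof. intros. pose proof (proj2 (Hsm (2 :: nil)%nat) 1%nat x q v) as E. simpl in E. apply Derive_correct in E. exact E. Qed.

Lemma taylorH : forall P V, exists K, 0 <= K /\ forall x p v a b,
  Rabs p <= P -> Rabs v <= V -> Rabs a <= 1 -> Rabs b <= 1 ->
  H x (p + a) (v + b) <= H x p v + Hp H x p v * a + Hu H x p v * b + K * (a * a + b * b).
Proof.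
  intros P V.
  destruct (pderiv_bound (1 :: 1 :: nil)%nat ltac:(repeat constructor; discriminate) (Rabs P + 2) (Rabs V + 2)) as [K1 [HK1 B1]].
  destruct (pderiv_bound (2 :: 2 :: nil)%nat ltac:(repeat constructor; discriminate) (Rabs P + 2) (Rabs V + 2)) as [K2 [HK2 B2]].
  destruct (pderiv_bound (1 :: 2 :: nil)%nat ltac:(repeat constructor; discriminate) (Rabs P + 2) (Rabs V + 2)) as [K3 [HK3 B3]].
  exists (K1 + K2 + K3). split; [lra|]. intros x p v a b Hpb Hvb Ha Hb.
  assert (Hp' : Rabs p <= Rabs P) by (pose proof (Rle_abs P); lra).
  assert (Hv' : Rabs v <= Rabs V) by (pose proof (Rle_abs V); lra).
  assert (SA : Rabs (H x (p + a) v - H x p v - Hp H x p v * a) <= K1 * (a * a)).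
  { apply (taylor1 (fun q => H x q v) (fun q => Hp H x q v) p K1 a HK1); auto.
    - intros; apply Hder_p.
    - apply (lip_of_deriv (fun q => Hp H x q v) (fun q => pderiv (1 :: 1 :: nil)%nat H x q v) p K1).
      + intros; apply Hpder_p.
      + intros q Hq. apply B1.
        * pose proof (Rabs_triang_inv q p). lra.
        * lra. }
  assert (Hpa : Rabs (p + a) <= Rabs P + 1) by (pose proof (Rabs_triang p a); lra).
  assert (SB : Rabs (H x (p + a) (v + b) - H x (p + a) v - Hu H x (p + a) v * b) <= K2 * (b * b)).
  { apply (taylor1 (fun w => H x (p + a) w) (fun w => Hu H x (p + a) w) v K2 b HK2); auto.
    - intros; apply Hder_u.
    - apply (lip_of_deriv (fun w => Hu H x (p + a) w) (fun w => pderiv (2 :: 2 :: nil)%nat H x (p + a) w) v K2).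
      + intros; apply Huder_u.
      + intros q Hq. apply B2.
        * lra.
        * pose proof (Rabs_triang_inv q v). lra. }
  assert (SC : Rabs (Hu H x (p + a) v - Hu H x p v) <= K3 * Rabs (p + a - p)).
  { apply (lip_of_deriv (fun q => Hu H x q v) (fun q => pderiv (1 :: 2 :: nil)%nat H x q v) p K3).
    - intros; apply Huder_p.
    - intros q Hq. apply B3.
      + pose proof (Rabs_triang_inv q p). lra.
      + lra.
    - replace (p + a - p) with a by ring. auto.
    - rewrite Rminus_eq_0, Rabs_R0; lra. }
  replace (p + a - p) with a in SC by ring.
  apply Rabs_le_between in SA. apply Rabs_le_between in SB.
  assert (SC' : Rabs ((Hu H x (p + a) v - Hu H x p v) * b) <= K3 * Rabs a * Rabs b).
  { rewrite Rabs_mult. apply Rmult_le_compat_r; auto. apply Rabs_pos. }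
  apply Rabs_le_between in SC'.
  assert (Hab : Rabs a * Rabs b <= a * a + b * b).
  { pose proof (Rabs_pos a). pose proof (Rabs_pos b).
    assert (Rabs a * Rabs a = a * a) by (rewrite <- Rabs_mult; apply Rabs_pos_eq; nra).
    assert (Rabs b * Rabs b = b * b) by (rewrite <- Rabs_mult; apply Rabs_pos_eq; nra). nra. }
  assert (K3 * Rabs a * Rabs b <= K3 * (a * a + b * b)) by (rewrite Rmult_assoc; apply Rmult_le_compat_l; auto).
  assert (K1 * (a * a) <= K1 * (a * a + b * b)) by (apply Rmult_le_compat_l; nra).
  assert (K2 * (b * b) <= K2 * (a * a + b * b)) by (apply Rmult_le_compat_l; nra).
  nra.
Qed.

End TaylorH.

Lemma RInt_lin (f g : R -> R) a b m : ex_RInt f a b -> ex_RInt g a b ->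
  RInt (fun t => m * f t - g t) a b = m * RInt f a b - RInt g a b.
Proof.
  intros Hf Hg.
  apply (is_RInt_unique (V := R_CompleteNormedModule)).
  apply (is_RInt_minus (V := R_NormedModule) (fun t => m * f t) g).
  - apply (is_RInt_scal (V := R_NormedModule) f). apply (RInt_correct (V := R_CompleteNormedModule)); auto.
  - apply (RInt_correct (V := R_CompleteNormedModule)); auto.
Qed.

Lemma exRI (f : R -> R) a b : (forall x, continuous f x) -> ex_RInt f a b.
Proof. intros Hc. apply (ex_RInt_continuous (V := R_CompleteNormedModule)). intros; apply Hc. Qed.

Lemma RInt_deriv (f : R -> R) x : (forall y, continuous f y) -> is_derive (fun y => RInt f 0 y) x (f x).
Proof.
  intros Hc. apply (is_derive_RInt (V := R_CompleteNormedModule) f (fun y => RInt f 0 y) 0 x).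
  - apply filter_forall. intros b. apply (RInt_correct (V := R_CompleteNormedModule)). apply exRI; auto.
  - apply Hc.
Qed.

Lemma RInt_per (f : R -> R) : (forall x, continuous f x) -> (forall x, f (x + 1) = f x) ->
  RInt f 0 1 = 0 -> forall x, RInt f 0 (x + 1) = RInt f 0 x.
Proof.
  intros Hc Hp H0 x.
  rewrite <- (RInt_Chasles (V := R_CompleteNormedModule) f 0 1 (x + 1)) by (apply exRI; auto).
  rewrite H0. 
  assert (E : RInt f 1 (x + 1) = RInt f 0 x).
  { pose proof (RInt_comp_lin (V := R_CompleteNormedModule) f 1 1 0 x) as E.
    replace (1 * 0 + 1) with 1 in E by ring. replace (1 * x + 1) with (x + 1) in E by ring.
    rewrite <- E by (apply exRI; auto). apply RInt_ext. intros y _.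
    replace (1 * y + 1) with (y + 1) by ring. rewrite Hp. unfold scal; simpl. unfold mult; simpl. ring. }
  change (0 + RInt f 1 (x + 1) = RInt f 0 x). rewrite E. ring.
Qed.

Lemma cont3_comp (g : R -> R -> R -> R) (a b c : R -> R) x :
  (forall x p v, continuous3 g x p v) -> continuous a x -> continuous b x -> continuous c x ->
  continuous (fun y => g (a y) (b y) (c y)) x.
Proof.
  intros Hg Ha Hb Hc. apply eps_cont. intros eps He.
  destruct (Hg (a x) (b x) (c x) eps He) as [d [Hd HD]].
  destruct (cont_eps a x Ha d Hd) as [d1 [Hd1 HD1]].
  destruct (cont_eps b x Hb d Hd) as [d2 [Hd2 HD2]].
  destruct (cont_eps c x Hc d Hd) as [d3 [Hd3 HD3]].
  exists (Rmin d1 (Rmin d2 d3)). split; [repeat apply Rmin_pos; auto|].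
  pose proof (Rmin_l d1 (Rmin d2 d3)). pose proof (Rmin_r d1 (Rmin d2 d3)).
  pose proof (Rmin_l d2 d3). pose proof (Rmin_r d2 d3).
  intros y Hy. apply HD; [apply HD1|apply HD2|apply HD3]; lra.
Qed.

Section Main.
Variables (H : R -> R -> R -> R) (kappa : R) (u0 : R -> R) (x0 : R).
Hypothesis H_smooth : smooth3 H.
Hypothesis H_per : forall x p u, H (x + 1) p u = H x p u.
Hypothesis H_conv : forall x p u, 0 < Hpp H x p u.
Hypothesis H_superlin : superlinear_p H.
Hypothesis H_lip : forall x p u, Rabs (Hu H x p u) <= kappa.
Hypothesis u0_visc : viscosity_solution H u0.
Hypothesis u0_nondeg : forall x, ex_derive u0 x -> Hp H x (Derive u0 x) (u0 x) <> 0.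
Hypothesis mu_neg : mu H u0 < 0.

Lemma D_der : forall x, is_derive u0 x (Derive u0 x).
Proof. apply (u_C1 H u0); auto. Qed.
Lemma D_cont : forall x, continuous (Derive u0) x.
Proof. apply (u_C1 H u0); auto. Qed.
Lemma u0_eq : forall x, H x (Derive u0 x) (u0 x) = 0.
Proof. apply (u_eq H u0); auto. Qed.
Lemma u0_per : forall x, u0 (x + 1) = u0 x.
Proof. destruct u0_visc as [P _]. exact P. Qed.
Lemma u0_cont : forall x, continuous u0 x.
Proof. destruct u0_visc as [_ [P _]]. exact P. Qed.

Lemma D_per : forall x, Derive u0 (x + 1) = Derive u0 x.
Proof.
  intros x. symmetry. apply is_derive_unique.
  apply (is_derive_ext (fun y => u0 (y + 1))); [intros; apply u0_per|].
  assert (Hc : is_derive (fun y => y + 1) x 1) by (auto_derive; auto; ring).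
  pose proof (is_derive_comp u0 (fun y => y + 1) x _ _ (D_der (x + 1)) Hc) as E.
  unfold scal in E; simpl in E; unfold mult in E; simpl in E. rewrite Rmult_1_l in E. exact E.
Qed.

Lemma B_cont : forall x, continuous (Bfun H u0) x.
Proof.
  intros x. unfold Bfun. apply (cont3_comp (Hp H) (fun y => y) (Derive u0) u0).
  - exact (proj1 (H_smooth (1%nat :: nil))).
  - apply continuous_id. - apply D_cont. - apply u0_cont.
Qed.

Lemma Hu0_cont : forall x, continuous (Hu0 H u0) x.
Proof.
  intros x. unfold Hu0. apply (cont3_comp (Hu H) (fun y => y) (Derive u0) u0).
  - exact (proj1 (H_smooth (2%nat :: nil))).
  - apply continuous_id. - apply D_cont. - apply u0_cont.
Qed.

Lemma B_per : forall x, Bfun H u0 (x + 1) = Bfun H u0 x.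
Proof.
  intros x. unfold Bfun. rewrite D_per, u0_per. unfold Hp, partial. apply Derive_ext. intros; apply H_per.
Qed.

Lemma Hu0_per : forall x, Hu0 H u0 (x + 1) = Hu0 H u0 x.
Proof.
  intros x. unfold Hu0. rewrite D_per, u0_per. unfold Hu, partial. apply Derive_ext. intros; apply H_per.
Qed.

Lemma B_nz : forall x, Bfun H u0 x <> 0.
Proof. intros x. unfold Bfun. apply u0_nondeg. eexists; apply D_der. Qed.

Lemma invB_cont : forall x, continuous (fun t => / Bfun H u0 t) x.
Proof. intros x. apply continuous_Rinv_comp; [apply B_cont|apply B_nz]. Qed.

Definition Gf (t : R) := (mu H u0 - Hu0 H u0 t) / Bfun H u0 t.

Lemma Gf_cont : forall x, continuous Gf x.
Proof.
  intros x. unfold Gf, Rdiv.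
  apply (continuous_mult (fun t => mu H u0 - Hu0 H u0 t) (fun t => / Bfun H u0 t)); [|apply invB_cont].
  apply (continuous_minus (fun _ => mu H u0) (Hu0 H u0)); [apply continuous_const|apply Hu0_cont].
Qed.

Lemma Gf_per : forall x, Gf (x + 1) = Gf x.
Proof. intros. unfold Gf. rewrite B_per, Hu0_per. auto. Qed.

Lemma intB_nz : RInt (fun t => / Bfun H u0 t) 0 1 <> 0.
Proof.
  intro E. pose proof mu_neg as M. unfold mu in M. rewrite E in M. unfold Rdiv in M.
  rewrite Rinv_0, Rmult_0_r in M. lra.
Qed.

Lemma Gf_int0 : RInt Gf 0 1 = 0.
Proof.
  assert (E : RInt Gf 0 1 = RInt (fun t => mu H u0 * (/ Bfun H u0 t) - Hu0 H u0 t / Bfun H u0 t) 0 1).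
  { apply (RInt_ext (V := R_CompleteNormedModule)). intros. unfold Gf. unfold Rdiv. simpl. ring. }
  rewrite E. rewrite RInt_lin.
  - pose proof intB_nz. unfold mu. simpl. field. auto.
  - apply exRI. apply invB_cont.
  - apply exRI. intros x. unfold Rdiv.
    apply (continuous_mult (Hu0 H u0) (fun t => / Bfun H u0 t)); [apply Hu0_cont|apply invB_cont].
Qed.

Definition Ifun (x : R) := RInt Gf 0 x.

Lemma I_der : forall x, is_derive Ifun x (Gf x).
Proof. intros x. apply RInt_deriv. apply Gf_cont. Qed.

Lemma I_per : forall x, Ifun (x + 1) = Ifun x.
Proof. intros x. apply RInt_per; [apply Gf_cont|apply Gf_per|apply Gf_int0]. Qed.

Lemma rho_eq : forall x, rho H u0 x = exp (Ifun x).
Proof. intros. reflexivity. Qed.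

Lemma rho_der : forall x, is_derive (rho H u0) x (Gf x * rho H u0 x).
Proof.
  intros x. unfold rho. fold Gf. 
  apply (is_derive_ext (fun y => exp (Ifun y))); [intros; reflexivity|].
  pose proof (is_derive_comp exp Ifun x (exp (Ifun x)) (Gf x)) as E.
  apply E; [|apply I_der].
  apply is_derive_Reals. apply derivable_pt_lim_exp.
Qed.

Lemma rho_bounds : exists rmin rmax, 0 < rmin /\ forall x, rmin <= rho H u0 x <= rmax.
Proof.
  destruct (per_bound Ifun I_per) as [M HM].
  { intros x _. apply exd_cont. eexists; apply I_der. }
  exists (exp (- M)), (exp M). split; [apply exp_pos|]. intros x. rewrite rho_eq.
  specialize (HM x). apply Rabs_le_between in HM. split.
  - destruct (Req_dec (- M) (Ifun x)) as [E|E]; [rewrite E; lra|]. left; apply exp_increasing; lra.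
  - destruct (Req_dec (Ifun x) M) as [E|E]; [rewrite E; lra|]. left; apply exp_increasing; lra.
Qed.


Definition c2 := 2 * PI / Zc H u0.

Lemma f_der : forall x, is_derive (ffun H u0) x (c2 * (- / Bfun H u0 x)).
Proof.
  intros x. unfold ffun. fold c2. apply is_derive_scal.
  apply (RInt_deriv (fun t => - / Bfun H u0 t)). intros y.
  apply (continuous_opp (fun t => / Bfun H u0 t)). apply invB_cont.
Qed.

Lemma w_dt : forall eps x t, is_derive (fun s => wfun H u0 x0 eps x s) t
  (eps * rho H u0 x * (cos (- (PI / 2) + ffun H u0 x - ffun H u0 x0 + c2 * t) * c2)).
Proof.
  intros eps x t. unfold wfun. fold c2. auto_derive; auto. ring.
Qed.

Lemma w_dx : forall eps x t, is_derive (fun y => wfun H u0 x0 eps y t) x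
  (Derive u0 x + eps * (Gf x * rho H u0 x) + eps * (Gf x * rho H u0 x) * sin (- (PI / 2) + ffun H u0 x - ffun H u0 x0 + c2 * t)
    + eps * rho H u0 x * (cos (- (PI / 2) + ffun H u0 x - ffun H u0 x0 + c2 * t) * (c2 * (- / Bfun H u0 x)))).
Proof.
  intros eps x t. unfold wfun. fold c2. auto_derive.
  - split; [eexists; apply D_der|]. split; [eexists; apply rho_der|].
    split; [eexists; apply rho_der|]. split; [eexists; apply f_der|]. auto.
  - replace (Derive (fun x => u0 x) x) with (Derive u0 x) by reflexivity.
    replace (Derive (fun x => rho H u0 x) x) with (Gf x * rho H u0 x) by (symmetry; apply is_derive_unique; apply rho_der).
    replace (Derive (fun x => ffun H u0 x) x) with (c2 * - / Bfun H u0 x) by (symmetry; apply is_derive_unique; apply f_der).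
    replace (- (PI / 2) + ffun H u0 x + - ffun H u0 x0 + c2 * t) with (- (PI / 2) + ffun H u0 x - ffun H u0 x0 + c2 * t) by ring.
    ring.
Qed.


Lemma sin_shift : forall th, sin (th + c2 * Tper H u0) = sin th.
Proof.
  intros th. unfold Tper, c2.
  assert (Hz : Zc H u0 <> 0) by (unfold Zc; pose proof intB_nz; lra).
  destruct (Rle_or_lt 0 (Zc H u0)) as [Hp|Hn].
  - rewrite Rabs_pos_eq by lra. replace (2 * PI / Zc H u0 * Zc H u0) with (2 * PI) by (field; auto).
    rewrite sin_plus, cos_2PI, sin_2PI. ring.
  - rewrite Rabs_left by lra. replace (2 * PI / Zc H u0 * - Zc H u0) with (- (2 * PI)) by (field; auto).
    rewrite sin_plus, cos_neg, sin_neg, cos_2PI, sin_2PI. ring.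
Qed.

Lemma mul_le_div (x y c : R) : 0 < c -> x <= y / c -> x * c <= y.
Proof. intros Hc Hx. replace y with ((y / c) * c) by (field; lra). apply Rmult_le_compat_r; lra. Qed.

Lemma abs_sq (y : R) : Rabs y * Rabs y = y * y.
Proof. rewrite <- Rabs_mult. apply Rabs_pos_eq. nra. Qed.

Lemma main_est : exists eps1 : R, 0 < eps1 /\
    forall eps : R, 0 < eps -> eps <= eps1 ->
      forall x t : R, 0 <= t ->
        wfun H u0 x0 eps x (t + Tper H u0) = wfun H u0 x0 eps x t /\
        Derive (fun s => wfun H u0 x0 eps x s) t
          + H x (Derive (fun y => wfun H u0 x0 eps y t) x) (wfun H u0 x0 eps x t)
          <= 0.
Proof.
  destruct rho_bounds as [rmin [rmax [Hrmin Hr]]].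
  assert (Hrmax : rmin <= rmax) by (specialize (Hr 0); lra).
  destruct (per_bound (Derive u0) D_per) as [MD HMD]; [intros; apply D_cont|].
  destruct (per_bound u0 u0_per) as [M0 HM0]; [intros; apply u0_cont|].
  destruct (per_bound Gf Gf_per) as [MG HMG]; [intros; apply Gf_cont|].
  destruct (per_bound (fun x => c2 * - / Bfun H u0 x)) as [MF HMF].
  { intros x. rewrite B_per. auto. }
  { intros x _. apply (continuous_scal_r c2 (fun x => - / Bfun H u0 x)).
    apply (continuous_opp (fun t => / Bfun H u0 t)). apply invB_cont. }
  destruct (taylorH H H_smooth H_per MD M0) as [K [HK HT]].
  assert (HMG0 : 0 <= MG) by (pose proof (HMG 0); pose proof (Rabs_pos (Gf 0)); lra).
  assert (HMF0 : 0 <= MF) by (pose proof (HMF 0); pose proof (Rabs_pos (c2 * - / Bfun H u0 0)); lra).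
  set (Rp := MG * rmax).
  assert (HRp : 0 <= Rp) by (unfold Rp; apply Rmult_le_pos; lra).
  set (Cst := 4 * (Rp * Rp) + 4 * (rmax * rmax) * (MF * MF) + 2 * (rmax * rmax)).
  assert (HCst : 0 <= Cst).
  { unfold Cst. assert (0 <= Rp * Rp) by nra. assert (0 <= rmax * rmax) by nra.
    assert (0 <= MF * MF) by nra. assert (0 <= (rmax * rmax) * (MF * MF)) by nra. lra. }
  set (A := 2 * Rp + rmax * MF).
  assert (HA : 0 <= A) by (unfold A; assert (0 <= rmax * MF) by nra; lra).
  set (e1 := - mu H u0 * rmin / (K * Cst + 1)).
  set (e2 := 1 / (A + 2 * rmax + 1)).
  assert (HKC : 0 <= K * Cst) by (apply Rmult_le_pos; auto).
  assert (He1 : 0 < e1) by (unfold e1; apply Rdiv_lt_0_compat; [pose proof mu_neg; nra|lra]).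
  assert (He2 : 0 < e2) by (unfold e2; apply Rdiv_lt_0_compat; lra).
  exists (Rmin e1 e2). split; [apply Rmin_pos; auto|].
  intros eps Heps Heps1 x t Ht.
  pose proof (Rmin_l e1 e2) as Hm1. pose proof (Rmin_r e1 e2) as Hm2.
  set (th := - (PI / 2) + ffun H u0 x - ffun H u0 x0 + c2 * t).
  split.
  { unfold wfun. fold c2. replace (- (PI / 2) + ffun H u0 x - ffun H u0 x0 + c2 * (t + Tper H u0))
      with (th + c2 * Tper H u0) by (unfold th; ring).
    rewrite sin_shift. reflexivity. }
  replace (Derive (fun s => wfun H u0 x0 eps x s) t) with
    (eps * rho H u0 x * (cos th * c2)) by (symmetry; apply is_derive_unique; apply w_dt).
  replace (Derive (fun y => wfun H u0 x0 eps y t) x) with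
    (Derive u0 x + eps * (Gf x * rho H u0 x) + eps * (Gf x * rho H u0 x) * sin th
    + eps * rho H u0 x * (cos th * (c2 * (- / Bfun H u0 x)))) by (symmetry; apply is_derive_unique; apply w_dx).
  set (rh := rho H u0 x). set (S := sin th). set (C := cos th).
  set (rp := Gf x * rh). set (fp := c2 * - / Bfun H u0 x).
  set (a := eps * rp * (1 + S) + eps * rh * (C * fp)).
  set (b := eps * rh * (1 + S)).
  assert (Ew : wfun H u0 x0 eps x t = u0 x + b) by (unfold wfun, b, S, th, rh; fold c2; ring).
  rewrite Ew.
  replace (Derive u0 x + eps * rp + eps * rp * S + eps * rh * (C * fp)) with (Derive u0 x + a) by (unfold a; ring).
  pose proof (Hr x) as Hrx. fold rh in Hrx.
  pose proof (SIN_bound th) as HS. fold S in HS.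
  pose proof (COS_bound th) as HC. fold C in HC.
  assert (HSC : S * S + C * C = 1) by (pose proof (sin2_cos2 th) as E; unfold Rsqr in E; fold S C in E; lra).
  set (s := 1 + S).
  assert (Hs : 0 <= s <= 2) by (unfold s; lra).
  assert (HC2 : C * C <= 2 * s) by (unfold s; nra).
  assert (Hrp : Rabs rp <= Rp).
  { unfold rp, Rp. rewrite Rabs_mult. rewrite (Rabs_pos_eq rh) by lra.
    apply Rmult_le_compat; auto; try apply Rabs_pos; lra. }
  assert (Hfp : Rabs fp <= MF) by (apply HMF).
  assert (HCa : Rabs C <= 1) by (apply Rabs_le; lra).
  assert (Ha1 : Rabs a <= 1).
  { unfold a. eapply Rle_trans; [apply Rabs_triang|].
    rewrite !Rabs_mult. rewrite (Rabs_pos_eq eps), (Rabs_pos_eq rh) by lra.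
    fold s. rewrite (Rabs_pos_eq s) by lra.
    assert (Rabs rp * s <= Rp * 2) by (apply Rmult_le_compat; try lra; apply Rabs_pos).
    assert (Rabs C * Rabs fp <= 1 * MF) by (apply Rmult_le_compat; try lra; apply Rabs_pos).
    assert (rh * (Rabs C * Rabs fp) <= rmax * MF) by (apply Rmult_le_compat; try lra; apply Rmult_le_pos; apply Rabs_pos).
    assert (eps * A <= 1).
    { assert (eps * (A + 2 * rmax + 1) <= 1) by (apply mul_le_div; [lra|]; change (eps <= e2); lra).
      nra. }
    unfold A in *. nra. }
  assert (Hb1 : Rabs b <= 1).
  { unfold b. fold s. rewrite !Rabs_mult. rewrite (Rabs_pos_eq eps), (Rabs_pos_eq rh), (Rabs_pos_eq s) by lra.
    assert (eps * (A + 2 * rmax + 1) <= 1) by (apply mul_le_div; [lra|]; change (eps <= e2); lra).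
    assert (rh * s <= rmax * 2) by (apply Rmult_le_compat; lra).
    assert (eps * (rh * s) <= eps * (rmax * 2)) by (apply Rmult_le_compat_l; lra).
    nra. }
  pose proof (HT x (Derive u0 x) (u0 x) a b (HMD x) (HM0 x) Ha1 Hb1) as Tay.
  rewrite u0_eq in Tay.
  assert (Id : eps * rh * (C * c2) + Hp H x (Derive u0 x) (u0 x) * a + Hu H x (Derive u0 x) (u0 x) * b
               = eps * mu H u0 * rh * s).
  { unfold a, b, s, rp, fp, Gf. unfold Bfun, Hu0. pose proof (B_nz x) as Bn. unfold Bfun in Bn. field. auto. }
  assert (Hq : a * a + b * b <= eps * eps * s * Cst).
  { assert (E1 : a * a <= 2 * ((eps * rp * s) * (eps * rp * s)) + 2 * ((eps * rh * (C * fp)) * (eps * rh * (C * fp)))).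
    { unfold a. fold s. set (X := eps * rp * s). set (Y := eps * rh * (C * fp)).
      pose proof (Rle_0_sqr (X - Y)) as Q. unfold Rsqr in Q. nra. }
    assert (rp * rp <= Rp * Rp) by (rewrite <- abs_sq; pose proof (Rabs_pos rp); nra).
    assert (fp * fp <= MF * MF) by (rewrite <- abs_sq; pose proof (Rabs_pos fp); nra).
    assert (rh * rh <= rmax * rmax) by nra.
    assert (s * s <= 2 * s) by nra.
    assert (T1 : (eps * rp * s) * (eps * rp * s) <= eps * eps * (2 * s) * (Rp * Rp)).
    { replace ((eps * rp * s) * (eps * rp * s)) with ((eps * eps) * (s * s) * (rp * rp)) by ring.
      apply Rmult_le_compat; try nra. }
    assert (T2 : (eps * rh * (C * fp)) * (eps * rh * (C * fp)) <= eps * eps * (2 * s) * ((rmax * rmax) * (MF * MF))).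
    { replace ((eps * rh * (C * fp)) * (eps * rh * (C * fp))) with ((eps * eps) * (C * C) * ((rh * rh) * (fp * fp))) by ring.
      apply Rmult_le_compat; try nra; try (apply Rmult_le_compat; nra). }
    assert (T3 : b * b <= eps * eps * (2 * s) * (rmax * rmax)).
    { unfold b. fold s. replace ((eps * rh * s) * (eps * rh * s)) with ((eps * eps) * (s * s) * (rh * rh)) by ring.
      apply Rmult_le_compat; try nra. }
    unfold Cst. nra. }
  assert (HKq : K * (a * a + b * b) <= K * (eps * eps * s * Cst)) by (apply Rmult_le_compat_l; auto).
  assert (Hmu : mu H u0 * rh <= mu H u0 * rmin) by (pose proof mu_neg; nra).
  assert (HepsK : eps * (K * Cst) <= - mu H u0 * rmin).
  { assert (eps * (K * Cst + 1) <= - mu H u0 * rmin) by (apply mul_le_div; [lra|]; change (eps <= e1); lra).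
    nra. }
  assert (Fin : eps * s * (mu H u0 * rh + eps * (K * Cst)) <= 0).
  { assert (0 <= eps * s) by nra. assert (mu H u0 * rh + eps * (K * Cst) <= 0) by lra. nra. }
  assert (E2 : eps * mu H u0 * rh * s + K * (eps * eps * s * Cst) = eps * s * (mu H u0 * rh + eps * (K * Cst))) by ring.
  lra.
Qed.

End Main.

Theorem lemma4p1_proof
  (H : R -> R -> R -> R) (kappa : R) (u0 : R -> R) (x0 : R)
  (H_smooth : smooth3 H)
  (H_per : forall x p u, H (x + 1) p u = H x p u)
  (H_conv : forall x p u, 0 < Hpp H x p u)
  (H_superlin : superlinear_p H)
  (kappa_pos : 0 < kappa)
  (H_lip : forall x p u, Rabs (Hu H x p u) <= kappa)
  (u0_visc : viscosity_solution H u0)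
  (u0_nondeg : forall x, ex_derive u0 x -> Hp H x (Derive u0 x) (u0 x) <> 0)
  (mu_neg : mu H u0 < 0)
  (x0_S : 0 <= x0 <= 1) :
  exists eps1 : R, 0 < eps1 /\
    forall eps : R, 0 < eps -> eps <= eps1 ->
      forall x t : R, 0 <= t ->
        wfun H u0 x0 eps x (t + Tper H u0) = wfun H u0 x0 eps x t /\
        Derive (fun s => wfun H u0 x0 eps x s) t
          + H x (Derive (fun y => wfun H u0 x0 eps y t) x) (wfun H u0 x0 eps x t)
          <= 0.
Proof.
  apply (main_est H u0 x0); auto.
Qed.


Theorem lemma4p1
  (H : R -> R -> R -> R) (kappa : R) (u0 : R -> R) (x0 : R)
  (H_smooth : smooth3 H)
  (H_per : forall x p u, H (x + 1) p u = H x p u)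
  (H_conv : forall x p u, 0 < Hpp H x p u)
  (H_superlin : superlinear_p H)
  (kappa_pos : 0 < kappa)
  (H_lip : forall x p u, Rabs (Hu H x p u) <= kappa)
  (u0_visc : viscosity_solution H u0)
  (u0_nondeg : forall x, ex_derive u0 x -> Hp H x (Derive u0 x) (u0 x) <> 0)
  (mu_neg : mu H u0 < 0)
  (x0_S : 0 <= x0 <= 1) :
  exists eps1 : R, 0 < eps1 /\
    forall eps : R, 0 < eps -> eps <= eps1 ->
      forall x t : R, 0 <= t ->
        wfun H u0 x0 eps x (t + Tper H u0) = wfun H u0 x0 eps x t /\
        Derive (fun s => wfun H u0 x0 eps x s) t
          + H x (Derive (fun y => wfun H u0 x0 eps y t) x) (wfun H u0 x0 eps x t)
          <= 0.
Proof.
  exact (lemma4p1_proof H kappa u0 x0 H_smooth H_per H_conv H_superlin kappa_pos H_lip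
           u0_visc u0_nondeg mu_neg x0_S).
Qed.
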